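(* Let $d\geq 1$, let $\delta$ be a sufficiently small positive real number, and let $P$ be a large positive integer. Then $$\int_{\mathfrak{M}}F(\alpha)\,d\alpha=P^{d+1}\mathfrak{S}(P^{\delta})J(P^{\delta})+O(P^{d+5\delta}),$$ where $$\mathfrak{S}(Q)=\sum_{q\leq Q}\sum_{\substack{a=1\\(a,q)=1}}^{q}q^{-2d-1}S(q,a),\qquad J(\mu)=\int_{|\gamma|<\mu}\left(\int_{[0,1]^{2d+1}}e(\gamma f(\xi))\,d\xi\right)d\gamma.$$
   Context: For an integer $d\geq 1$ define $f_d$: if $d=2k$ ($k\geq1$), $f_d(x_1,\ldots,x_d)=\prod_{i=1}^{k}(x_{2i-1}^2+x_{2i}^2)$; if $d=2k+1$ ($k\geq 0$), $f_d(x_1,\ldots,x_d)=x_1\prod_{i=1}^{k}(x_{2i}^2+x_{2i+1}^2)$. Let $f(x_1,\ldots,x_{2d+1})=f_d(x_1,\ldots,x_d)+f_d(x_{d+1},\ldots,x_{2d})-x_{2d+1}^d$. Let $e(\alpha)=e^{2\pi i\alpha}$, $B=\{1,\ldots,P\}^{2d+1}$, $F(\alpha)=\sum_{{\bf x}\in B}e(\alpha f({\bf x}))$, and $S(q,a)=\sum_{{\bf z}\bmod q}e\left(\frac{a}{q}f({\bf z})\right)$ (sum over ${\bf z}\in\{1,\ldots,q\}^{2d+1}$). For integers $1\leq q\leq P^{\delta}$, $1\leq a\leq q$, $(a,q)=1$, let $\mathfrak{M}(q,a)=\{\alpha\in\mathbb{R}:|\alpha-a/q|\leq P^{\delta-d}\}$,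 and let $\mathfrak{M}$ be the union of these sets. The sum over $q\leq Q$ is over positive integers $q$. The implied constant in $O$ depends at most on $d$. *)

(* Defs.v *)
From Stdlib Require Import Reals Arith Classical ClassicalEpsilon.
From Coquelicot Require Import Coquelicot.
Open Scope R_scope.

Definition CRInt (g : R -> C) (a b : R) : C :=
  @RInt C_R_CompleteNormedModule g a b.

Definition ee (alpha : R) : C := (cos (2 * PI * alpha), sin (2 * PI * alpha)).

(* Points of R^n are represented as x : nat -> R, coordinates x 1, ..., x n. *)
Definition upd (x : nat -> R) (i : nat) (t : R) : nat -> R :=
  fun j => if Nat.eqb j i then t else x j.

Fixpoint prodR (k : nat) (g : nat -> R) : R :=
  match k with O => 1 | S k' => prodR k' g * g k end.

(* f_d evaluated at (x_{s+1}, ..., x_{s+d}) *)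
Definition fd (d s : nat) (x : nat -> R) : R :=
  if Nat.even d then
    prodR (Nat.div2 d) (fun i => x (s + (2*i-1))%nat ^ 2 + x (s + 2*i)%nat ^ 2)
  else
    x (s + 1)%nat *
    prodR (Nat.div2 d) (fun i => x (s + 2*i)%nat ^ 2 + x (s + (2*i+1))%nat ^ 2).

Definition ff (d : nat) (x : nat -> R) : R :=
  fd d 0 x + fd d d x - x (2*d+1)%nat ^ d.

Fixpoint sumC (N : nat) (h : nat -> C) : C :=
  match N with O => 0%C | S N' => Cplus (sumC N' h) (h N) end.

Fixpoint boxsum (N n : nat) (g : (nat -> R) -> C) : C :=
  match n with
  | O => g (fun _ => 0)
  | S n' => sumC N (fun t => boxsum N n' (fun x => g (upd x (S n') (INR t))))
  end.

Fixpoint cubeint (n : nat) (g : (nat -> R) -> C) : C :=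
  match n with
  | O => g (fun _ => 0)
  | S n' => CRInt (fun t => cubeint n' (fun x => g (upd x (S n') t))) 0 1
  end.

Definition FF (d P : nat) (alpha : R) : C :=
  boxsum P (2*d+1) (fun x => ee (alpha * ff d x)).

(* S(q,a) = sum_{z mod q} e(a/q f(z)),  z in {1..q}^{2d+1} *)
Definition SS (d q a : nat) : C :=
  boxsum q (2*d+1) (fun z => ee (INR a / INR q * ff d z)).

Definition frakS (d : nat) (Q : R) : C :=
  sumC (Z.to_nat (up Q)) (fun q =>
    if Rle_dec (INR q) Q then
      sumC q (fun a =>
        if Nat.eqb (Nat.gcd a q) 1 then
          Cmult (RtoC (/ (INR q ^ (2*d+1)))) (SS d q a)
        else 0%C)
    else 0%C).

Definition JJ (d : nat) (mu : R) : C :=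
  CRInt (fun gamma => cubeint (2*d+1) (fun xi => ee (gamma * ff d xi))) (- mu) mu.

Definition in_major (d P : nat) (delta alpha : R) : Prop :=
  exists q a : nat, (1 <= q)%nat /\ INR q <= Rpower (INR P) delta /\
    (1 <= a <= q)%nat /\ Nat.gcd a q = 1%nat /\
    Rabs (alpha - INR a / INR q) <= Rpower (INR P) (delta - INR d).

Definition major_ind (d P : nat) (delta alpha : R) : R :=
  if excluded_middle_informative (in_major d P delta alpha) then 1 else 0.

(* int_M F(alpha) d alpha.  M is contained in [-1 - P^(delta-d), 2 + P^(delta-d)]
   (all centres a/q lie in (0,1]), so this is the integral over M. *)
Definition major_int (d P : nat) (delta : R) : C :=
  let r := Rpower (INR P) (delta - INR d) in
  CRInt (fun alpha => Cmult (RtoC (major_ind d P delta alpha)) (FF d P alpha))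
        (-1 - r) (2 + r).

(* Main.v *)
Require Import Defs.
From Stdlib Require Import Reals Arith.
From Coquelicot Require Import Coquelicot.
From Stdlib Require Import Lia Lra ZArith Psatz FunctionalExtensionality Classical ClassicalEpsilon.
Open Scope R_scope.

Lemma Cmod_le_sum (z : C) : Cmod z <= Rabs (fst z) + Rabs (snd z).
Proof.
  unfold Cmod. rewrite <- (sqrt_Rsqr (Rabs (fst z) + Rabs (snd z))).
  2: { pose proof (Rabs_pos (fst z)); pose proof (Rabs_pos (snd z)); lra. }
  apply sqrt_le_1_alt. unfold Rsqr.
  pose proof (Rabs_pos (fst z)); pose proof (Rabs_pos (snd z)).
  replace (fst z ^ 2) with (Rabs (fst z) * Rabs (fst z)).
  2: { rewrite <- Rabs_mult. rewrite Rabs_right. ring. nra. }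
  replace (snd z ^ 2) with (Rabs (snd z) * Rabs (snd z)).
  2: { rewrite <- Rabs_mult. rewrite Rabs_right. ring. nra. }
  nra.
Qed.

Lemma Cmod_minus_sym (a b : C) : Cmod (a - b) = Cmod (b - a).
Proof. replace (a - b)%C with (- (b - a))%C by ring. apply Cmod_opp. Qed.

Lemma Cmod_tri3 (a b c : C) : Cmod (a - c) <= Cmod (a - b) + Cmod (b - c).
Proof. replace (a - c)%C with ((a - b) + (b - c))%C by ring. apply Cmod_triangle. Qed.

Lemma Cmod_RtoC_mult (r : R) (z : C) : Cmod (RtoC r * z) = Rabs r * Cmod z.
Proof. rewrite Cmod_mult, Cmod_R. reflexivity. Qed.

Lemma ee_mod (u : R) : Cmod (ee u) = 1.
Proof.
  unfold ee, Cmod; simpl. pose proof (sin2_cos2 (2*PI*u)). unfold Rsqr in H.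
  match goal with |- sqrt ?x = 1 => replace x with 1 by lra end. apply sqrt_1.
Qed.

Lemma cos_lip (a b : R) : Rabs (cos a - cos b) <= Rabs (a - b).
Proof.
  destruct (MVT_abs cos (fun c => - sin c) b a) as [c [Hc _]].
  { intros; apply derivable_pt_lim_cos. }
  rewrite Hc. rewrite Rabs_Ropp. pose proof (SIN_bound c).
  assert (Rabs (sin c) <= 1) by (apply Rabs_le; lra).
  pose proof (Rabs_pos (a - b)). nra.
Qed.

Lemma sin_lip (a b : R) : Rabs (sin a - sin b) <= Rabs (a - b).
Proof.
  destruct (MVT_abs sin cos b a) as [c [Hc _]].
  { intros; apply derivable_pt_lim_sin. }
  rewrite Hc. pose proof (COS_bound c).
  assert (Rabs (cos c) <= 1) by (apply Rabs_le; lra).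
  pose proof (Rabs_pos (a - b)). nra.
Qed.

Lemma ee_lip (u v : R) : Cmod (ee u - ee v) <= 4 * PI * Rabs (u - v).
Proof.
  eapply Rle_trans. apply Cmod_le_sum. unfold ee; simpl.
  replace (cos (2*PI*u) + - cos (2*PI*v)) with (cos (2*PI*u) - cos (2*PI*v)) by ring.
  replace (sin (2*PI*u) + - sin (2*PI*v)) with (sin (2*PI*u) - sin (2*PI*v)) by ring.
  pose proof (cos_lip (2*PI*u) (2*PI*v)). pose proof (sin_lip (2*PI*u) (2*PI*v)).
  replace (2*PI*u - 2*PI*v) with ((2*PI)*(u-v)) in * by ring.
  rewrite Rabs_mult in *. rewrite (Rabs_right (2*PI)) in * by (pose proof PI_RGT_0; lra).
  lra.
Qed.

Lemma ee_add (u v : R) : ee (u + v) = (ee u * ee v)%C.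
Proof.
  unfold ee. replace (2*PI*(u+v)) with (2*PI*u + 2*PI*v) by ring.
  rewrite cos_plus, sin_plus. apply injective_projections; simpl; ring.
Qed.

Lemma ee_nat (u : R) (k : nat) : ee (u + INR k) = ee u.
Proof.
  unfold ee. replace (2*PI*(u+INR k)) with (2*PI*u + 2 * INR k * PI) by ring.
  rewrite cos_period, sin_period. reflexivity.
Qed.

Lemma ee_Z (u : R) (k : Z) : ee (u + IZR k) = ee u.
Proof.
  destruct (Z_le_gt_dec 0 k).
  - rewrite <- (Z2Nat.id k) by lia. rewrite <- INR_IZR_INZ. apply ee_nat.
  - rewrite <- (ee_nat (u + IZR k) (Z.to_nat (- k))). f_equal.
    rewrite INR_IZR_INZ, Z2Nat.id by lia. rewrite opp_IZR. ring.
Qed.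

Lemma sumC_ext N (h1 h2 : nat -> C) : (forall t, (1 <= t <= N)%nat -> h1 t = h2 t) -> sumC N h1 = sumC N h2.
Proof.
  induction N; simpl; intros; auto. rewrite IHN by (intros; apply H; lia). rewrite H by lia. auto.
Qed.

Lemma sumC_plus N (h1 h2 : nat -> C) : sumC N (fun t => h1 t + h2 t)%C = (sumC N h1 + sumC N h2)%C.
Proof. induction N; simpl. ring. rewrite IHN. ring. Qed.

Lemma sumC_minus N (h1 h2 : nat -> C) : sumC N (fun t => h1 t - h2 t)%C = (sumC N h1 - sumC N h2)%C.
Proof. induction N; simpl. ring. rewrite IHN. ring. Qed.

Lemma sumC_scal N (c : C) (h : nat -> C) : sumC N (fun t => c * h t)%C = (c * sumC N h)%C.
Proof. induction N; simpl. ring. rewrite IHN. ring. Qed.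

Lemma sumC_zero N : sumC N (fun _ => 0%C) = 0%C.
Proof. induction N; simpl; auto. rewrite IHN. ring. Qed.

Lemma sumC_bound N (h : nat -> C) B : (forall t, (1 <= t <= N)%nat -> Cmod (h t) <= B) -> Cmod (sumC N h) <= INR N * B.
Proof.
  induction N; cbn [sumC]; intros.
  - rewrite Cmod_0. simpl; lra.
  - eapply Rle_trans. apply Cmod_triangle. rewrite S_INR.
    assert (Cmod (sumC N h) <= INR N * B) by (apply IHN; intros; apply H; lia).
    assert (Cmod (h (S N)) <= B) by (apply H; lia). lra.
Qed.

Lemma sumC_split a b (h : nat -> C) : sumC (a + b) h = (sumC a h + sumC b (fun i => h (a + i)%nat))%C.
Proof.
  induction b; simpl. rewrite Nat.add_0_r. ring.
  rewrite Nat.add_succ_r. simpl. rewrite IHb. ring.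
Qed.

Lemma sumC_swap N M (h : nat -> nat -> C) :
  sumC N (fun i => sumC M (fun j => h i j)) = sumC M (fun j => sumC N (fun i => h i j)).
Proof.
  induction N; simpl. rewrite sumC_zero. auto.
  rewrite IHN. rewrite <- sumC_plus. auto.
Qed.

Definition IntPt (x : nat -> R) := forall j, exists k : nat, x j = INR k.

Lemma IntPt0 : IntPt (fun _ => 0).
Proof. intro j. exists 0%nat. reflexivity. Qed.

Lemma IntPt_upd x j k : IntPt x -> IntPt (upd x j (INR k)).
Proof. intros H i. unfold upd. destruct (Nat.eqb i j). exists k; auto. apply H. Qed.

Lemma boxsum_ext_gen N m : forall (g1 g2 : (nat -> R) -> C) (x0 : nat -> R), IntPt x0 ->
  (forall x, IntPt x -> g1 x = g2 x) -> boxsum N m g1 = boxsum N m g2.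
Proof.
  induction m; simpl; intros. apply H0. apply IntPt0.
  apply sumC_ext. intros. apply (IHm _ _ x0); auto. intros; apply H0. apply IntPt_upd; auto.
Qed.

Lemma boxsum_ext N m (g1 g2 : (nat -> R) -> C) :
  (forall x, IntPt x -> g1 x = g2 x) -> boxsum N m g1 = boxsum N m g2.
Proof. intros. apply (boxsum_ext_gen N m g1 g2 (fun _ => 0)); auto. apply IntPt0. Qed.

Lemma boxsum_plus N m : forall (g1 g2 : (nat -> R) -> C),
  boxsum N m (fun x => g1 x + g2 x)%C = (boxsum N m g1 + boxsum N m g2)%C.
Proof. induction m; simpl; intros; auto. rewrite <- sumC_plus. apply sumC_ext. intros; apply IHm. Qed.

Lemma boxsum_minus N m : forall (g1 g2 : (nat -> R) -> C),
  boxsum N m (fun x => g1 x - g2 x)%C = (boxsum N m g1 - boxsum N m g2)%C.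
Proof. induction m; simpl; intros; auto. rewrite <- sumC_minus. apply sumC_ext. intros; apply IHm. Qed.

Lemma boxsum_scal N m : forall (c : C) (g : (nat -> R) -> C),
  boxsum N m (fun x => c * g x)%C = (c * boxsum N m g)%C.
Proof. induction m; simpl; intros; auto. rewrite <- sumC_scal. apply sumC_ext. intros; apply IHm. Qed.

Lemma boxsum_sumC N m : forall M (h : nat -> (nat -> R) -> C),
  boxsum N m (fun x => sumC M (fun t => h t x)) = sumC M (fun t => boxsum N m (h t)).
Proof.
  induction m; simpl; intros; auto.
  rewrite sumC_swap. apply sumC_ext. intros. apply IHm.
Qed.

Lemma boxsum_bound N m : forall (g : (nat -> R) -> C) B,
  (forall x, IntPt x -> Cmod (g x) <= B) -> Cmod (boxsum N m g) <= INR N ^ m * B.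
Proof.
  induction m; simpl; intros.
  - rewrite Rmult_1_l. apply H, IntPt0.
  - eapply Rle_trans. apply sumC_bound. intros. apply IHm. intros. apply H. apply IntPt_upd; auto.
    lra.
Qed.


Definition Dom (u : nat -> R) := forall j, -1 <= u j <= 2.
Definition NiceC (K : R) (g : (nat -> R) -> C) := 0 <= K /\ forall u j t, Dom u -> -1 <= t <= 2 ->
  Cmod (g (upd u j t) - g u) <= K * Rabs (t - u j).

Lemma upd_same u j a b : upd (upd u j a) j b = upd u j b.
Proof. apply functional_extensionality; intro i; unfold upd. destruct (Nat.eqb i j); auto. Qed.
Lemma upd_comm u i j a b : i <> j -> upd (upd u i a) j b = upd (upd u j b) i a.
Proof.
  intro H. apply functional_extensionality; intro k; unfold upd.
  destruct (Nat.eqb_spec k j); destruct (Nat.eqb_spec k i); subst; auto. congruence.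
Qed.
Lemma upd_eq u j a : upd u j a j = a.
Proof. unfold upd. rewrite Nat.eqb_refl. auto. Qed.
Lemma upd_neq u j a i : i <> j -> upd u j a i = u i.
Proof. intro H. unfold upd. destruct (Nat.eqb_spec i j); auto. congruence. Qed.
Lemma upd_self u j : upd u j (u j) = u.
Proof. apply functional_extensionality; intro i; unfold upd. destruct (Nat.eqb_spec i j); subst; auto. Qed.
Lemma Dom0 : Dom (fun _ => 0).
Proof. intro; lra. Qed.
Lemma Dom_upd u j t : Dom u -> -1 <= t <= 2 -> Dom (upd u j t).
Proof. intros H Ht i. unfold upd. destruct (Nat.eqb i j); auto. Qed.

Lemma Nice_upd K g i v : NiceC K g -> -1 <= v <= 2 -> NiceC K (fun u => g (upd u i v)).
Proof.
  intros [HK H] Hv. split; auto. intros u j t Hu Ht. destruct (Nat.eq_dec j i).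
  - subst. rewrite upd_same. replace (g (upd u i v) - g (upd u i v))%C with (RtoC 0) by ring.
    rewrite Cmod_0. pose proof (Rabs_pos (t - u i)). nra.
  - rewrite upd_comm by auto.
    pose proof (H (upd u i v) j t (Dom_upd _ _ _ Hu Hv) Ht). rewrite upd_neq in H0 by auto. exact H0.
Qed.

Lemma Nice_slice K g x i t s : NiceC K g -> Dom x -> -1 <= t <= 2 -> -1 <= s <= 2 ->
  Cmod (g (upd x i t) - g (upd x i s)) <= K * Rabs (t - s).
Proof.
  intros [HK H] Hx Ht Hs. pose proof (H (upd x i s) i t (Dom_upd _ _ _ Hx Hs) Ht).
  rewrite upd_same, upd_eq in H0. exact H0.
Qed.

Lemma lip_continuous (f : R -> C) z K a b : a < z < b -> 0 <= K ->
  (forall t, a <= t <= b -> Cmod (f t - f z) <= K * Rabs (t - z)) -> continuous f z.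
Proof.
  intros Hz HK H. unfold continuous. apply filterlim_locally. intro eps.
  assert (Hd : 0 < Rmin (Rmin (z - a) (b - z)) (eps / (K + 1))).
  { apply Rmin_pos. apply Rmin_pos; lra. apply Rdiv_lt_0_compat. apply cond_pos. lra. }
  exists (mkposreal _ Hd). intros y Hy. simpl in Hy.
  change (Rabs (y - z) < Rmin (Rmin (z - a) (b - z)) (eps / (K + 1))) in Hy.
  apply (@norm_compat1 R_AbsRing C_R_NormedModule). rewrite <- Cmod_norm. change (minus (f y) (f z)) with (Cminus (f y) (f z)).
  assert (H1 := Rmin_l (Rmin (z - a) (b - z)) (eps / (K + 1))).
  assert (H2 := Rmin_r (Rmin (z - a) (b - z)) (eps / (K + 1))).
  assert (H3 := Rmin_l (z - a) (b - z)). assert (H4 := Rmin_r (z - a) (b - z)).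
  assert (Hyab : a <= y <= b). { apply Rabs_def2 in Hy. lra. }
  eapply Rle_lt_trans. apply H; auto.
  assert (K * Rabs (y - z) <= K * (eps / (K+1))). { apply Rmult_le_compat_l; lra. }
  assert (K * (eps / (K+1)) < eps). { pose proof (cond_pos eps).
    apply (Rmult_lt_reg_r (K+1)). lra. field_simplify. nra. lra. }
  lra.
Qed.

Lemma CRInt_minus (f g : R -> C) a b : ex_RInt f a b -> ex_RInt g a b ->
  CRInt (fun x => f x - g x)%C a b = (CRInt f a b - CRInt g a b)%C.
Proof. intros. unfold CRInt. apply (RInt_minus (V:=C_R_CompleteNormedModule)); auto. Qed.

Lemma CRInt_plus (f g : R -> C) a b : ex_RInt f a b -> ex_RInt g a b ->
  CRInt (fun x => f x + g x)%C a b = (CRInt f a b + CRInt g a b)%C.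
Proof. intros. unfold CRInt. apply (RInt_plus (V:=C_R_CompleteNormedModule)); auto. Qed.

Lemma CRInt_bound (f : R -> C) a b M : a <= b -> ex_RInt f a b ->
  (forall x, a <= x <= b -> Cmod (f x) <= M) -> Cmod (CRInt f a b) <= (b - a) * M.
Proof.
  intros Hab Hf H. rewrite Cmod_norm. unfold CRInt.
  apply (norm_RInt_le_const (V:=C_R_NormedModule) f a b); auto.
  intros; rewrite <- Cmod_norm; auto.
  apply (RInt_correct (V:=C_R_CompleteNormedModule)). auto.
Qed.

Lemma CRInt_ext (f g : R -> C) a b : (forall x, Rmin a b < x < Rmax a b -> f x = g x) -> CRInt f a b = CRInt g a b.
Proof. intros. unfold CRInt. apply (RInt_ext (V:=C_R_CompleteNormedModule)). auto. Qed.

Lemma scal_C (c:C) r : @scal R_AbsRing C_R_NormedModule r c = (RtoC r * c)%C.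
Proof.
  destruct c as [c1 c2]. unfold scal; simpl. unfold prod_scal; simpl. unfold Cmult, RtoC; simpl.
  f_equal; unfold scal; simpl; unfold mult; simpl; ring.
Qed.

Lemma CRInt_const (c : C) a b : CRInt (fun _ => c) a b = (RtoC (b - a) * c)%C.
Proof.
  unfold CRInt. rewrite (RInt_const (V:=C_R_CompleteNormedModule)). apply scal_C.
Qed.

Lemma is_RInt_Cmult (f : R -> C) a b (c I : C) : is_RInt (V:=C_R_NormedModule) f a b I ->
  is_RInt (V:=C_R_NormedModule) (fun x => c * f x)%C a b (c * I)%C.
Proof.
  intro H.
  assert (H1 : is_RInt (V:=R_NormedModule) (fun t => fst (f t)) a b (fst I)).
  { apply (is_RInt_fct_extend_fst (U:=R_NormedModule) (V:=R_NormedModule) f). exact H. }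
  assert (H2 : is_RInt (V:=R_NormedModule) (fun t => snd (f t)) a b (snd I)).
  { apply (is_RInt_fct_extend_snd (U:=R_NormedModule) (V:=R_NormedModule) f). exact H. }
  destruct c as [c1 c2]. destruct I as [i1 i2]. simpl in *.
  replace ((c1, c2) * (i1, i2))%C with (c1 * i1 - c2 * i2, c1 * i2 + c2 * i1).
  2: { apply injective_projections; simpl; ring. }
  apply (is_RInt_fct_extend_pair (U:=R_NormedModule) (V:=R_NormedModule)).
  - eapply is_RInt_ext. 2: apply (is_RInt_minus (V:=R_NormedModule)).
    2: apply (is_RInt_scal (V:=R_NormedModule) _ _ _ c1 _ H1).
    2: apply (is_RInt_scal (V:=R_NormedModule) _ _ _ c2 _ H2).
    intros; simpl. unfold minus, plus, opp, scal; simpl. unfold mult; simpl. ring.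
  - eapply is_RInt_ext. 2: apply (is_RInt_plus (V:=R_NormedModule)).
    2: apply (is_RInt_scal (V:=R_NormedModule) _ _ _ c1 _ H2).
    2: apply (is_RInt_scal (V:=R_NormedModule) _ _ _ c2 _ H1).
    intros; simpl. unfold plus, scal; simpl. unfold mult; simpl. ring.
Qed.

Lemma ex_RInt_Cmult (f : R -> C) a b (c : C) : ex_RInt f a b -> ex_RInt (fun x => c * f x)%C a b.
Proof. intros [I H]. exists (c * I)%C. apply is_RInt_Cmult. exact H. Qed.

Lemma CRInt_Cmult (f : R -> C) a b (c : C) : ex_RInt f a b -> CRInt (fun x => c * f x)%C a b = (c * CRInt f a b)%C.
Proof.
  intros Hf. unfold CRInt. apply (is_RInt_unique (V:=C_R_CompleteNormedModule)).
  apply is_RInt_Cmult. apply (RInt_correct (V:=C_R_CompleteNormedModule)). exact Hf.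
Qed.

Lemma ex_RInt_lip (f : R -> C) lo hi a b K : lo < a -> a <= b -> b < hi -> 0 <= K ->
  (forall s t, lo <= s <= hi -> lo <= t <= hi -> Cmod (f s - f t) <= K * Rabs (s - t)) -> ex_RInt f a b.
Proof.
  intros. apply (ex_RInt_continuous (V:=C_R_CompleteNormedModule)). intros z Hz.
  rewrite Rmin_left in Hz by lra. rewrite Rmax_right in Hz by lra.
  apply (lip_continuous f z K lo hi); try lra. intros; apply H3; lra.
Qed.

Lemma Nice_ge0 K g : NiceC K g -> 0 <= K.
Proof. intros [H _]; auto. Qed.

Lemma cubeint_diff_int n :
  (forall K1 K2 g1 g2 eps, NiceC K1 g1 -> NiceC K2 g2 -> (forall u, Dom u -> Cmod (g1 u - g2 u) <= eps) ->
     Cmod (cubeint n g1 - cubeint n g2) <= eps) ->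
  forall K g i, NiceC K g -> forall s t, -1 <= s <= 2 -> -1 <= t <= 2 ->
    Cmod (cubeint n (fun x => g (upd x i s)) - cubeint n (fun x => g (upd x i t))) <= K * Rabs (s - t).
Proof.
  intros IH K g i Hg s t Hs Ht. apply (IH K K).
  apply Nice_upd; auto. apply Nice_upd; auto.
  intros u Hu. apply Nice_slice; auto.
Qed.

Lemma cubeint_diff n : forall K1 K2 g1 g2 eps, NiceC K1 g1 -> NiceC K2 g2 ->
  (forall u, Dom u -> Cmod (g1 u - g2 u) <= eps) -> Cmod (cubeint n g1 - cubeint n g2) <= eps.
Proof.
  induction n; intros K1 K2 g1 g2 eps H1 H2 H.
  - simpl. apply H. apply Dom0.
  - cbn [cubeint].
    assert (E1 : ex_RInt (fun t => cubeint n (fun x => g1 (upd x (S n) t))) 0 1).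
    { apply (ex_RInt_lip _ (-1) 2 0 1 K1); try lra. apply (Nice_ge0 _ _ H1).
      intros. apply (cubeint_diff_int n IHn); auto. }
    assert (E2 : ex_RInt (fun t => cubeint n (fun x => g2 (upd x (S n) t))) 0 1).
    { apply (ex_RInt_lip _ (-1) 2 0 1 K2); try lra. apply (Nice_ge0 _ _ H2).
      intros. apply (cubeint_diff_int n IHn); auto. }
    rewrite <- CRInt_minus by auto.
    replace eps with ((1 - 0) * eps) by ring.
    apply CRInt_bound. lra. apply (ex_RInt_minus (V:=C_R_NormedModule)); auto.
    intros t Ht. apply (IHn K1 K2). apply Nice_upd; auto; lra. apply Nice_upd; auto; lra.
    intros u Hu. apply H. apply Dom_upd; auto; lra.
Qed.

Lemma cubeint_lip n K g i : NiceC K g -> forall s t, -1 <= s <= 2 -> -1 <= t <= 2 ->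
    Cmod (cubeint n (fun x => g (upd x i s)) - cubeint n (fun x => g (upd x i t))) <= K * Rabs (s - t).
Proof. apply cubeint_diff_int. apply cubeint_diff. Qed.

Lemma cubeint_exint n K g i : NiceC K g -> ex_RInt (fun t => cubeint n (fun x => g (upd x i t))) 0 1.
Proof.
  intros Hg. apply (ex_RInt_lip _ (-1) 2 0 1 K); try lra. apply (Nice_ge0 _ _ Hg).
  intros. apply cubeint_lip; auto.
Qed.

Lemma cubeint_const n : forall c, cubeint n (fun _ => c) = c.
Proof.
  induction n; intros; simpl; auto.
  rewrite (CRInt_ext _ (fun _ => c)). rewrite CRInt_const. replace (1 - 0) with 1 by ring. ring.
  intros; apply IHn.
Qed.

Lemma Nice_const c : NiceC 0 (fun _ => c).
Proof. split. lra. intros. replace (c - c)%C with (RtoC 0) by ring. rewrite Cmod_0. lra. Qed.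

Lemma cubeint_bound n K g B : NiceC K g -> (forall u, Dom u -> Cmod (g u) <= B) -> Cmod (cubeint n g) <= B.
Proof.
  intros Hg H. replace (cubeint n g) with (cubeint n g - cubeint n (fun _ => RtoC 0))%C.
  apply (cubeint_diff n K 0). auto. apply Nice_const. intros. replace (g u - 0)%C with (g u) by ring. auto.
  rewrite cubeint_const. ring.
Qed.

Lemma Nice_scal K g c : NiceC K g -> NiceC (Cmod c * K) (fun u => c * g u)%C.
Proof.
  intros [HK H]. split. pose proof (Cmod_ge_0 c). nra.
  intros. replace (c * g (upd u j t) - c * g u)%C with (c * (g (upd u j t) - g u))%C by ring.
  rewrite Cmod_mult. rewrite Rmult_assoc. apply Rmult_le_compat_l. apply Cmod_ge_0. auto.
Qed.

Lemma cubeint_scal n : forall K g c, NiceC K g -> cubeint n (fun u => c * g u)%C = (c * cubeint n g)%C.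
Proof.
  induction n; intros K g c Hg; simpl; auto.
  rewrite (CRInt_ext _ (fun t => c * cubeint n (fun x => g (upd x (S n) t)))%C).
  apply CRInt_Cmult. apply (cubeint_exint n K). auto.
  intros t Ht. rewrite Rmin_left in Ht by lra. rewrite Rmax_right in Ht by lra.
  apply (IHn K). apply Nice_upd; auto. lra.
Qed.


Fixpoint sum0 (M : nat) (g : nat -> C) : C :=
  match M with O => RtoC 0 | S M' => (sum0 M' g + g M')%C end.

Lemma sum0_ext M (g1 g2 : nat -> C) : (forall y, (y < M)%nat -> g1 y = g2 y) -> sum0 M g1 = sum0 M g2.
Proof. induction M; simpl; intros; auto. rewrite IHM by (intros; apply H; lia). rewrite H by lia. auto. Qed.

Lemma sum0_minus M (g1 g2 : nat -> C) : sum0 M (fun y => g1 y - g2 y)%C = (sum0 M g1 - sum0 M g2)%C.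
Proof. induction M; simpl. ring. rewrite IHM. ring. Qed.

Lemma sum0_scal M (c : C) (g : nat -> C) : sum0 M (fun y => c * g y)%C = (c * sum0 M g)%C.
Proof. induction M; simpl. ring. rewrite IHM. ring. Qed.

Lemma sum0_sumC_swap M N (h : nat -> nat -> C) :
  sum0 M (fun y => sumC N (fun s => h y s)) = sumC N (fun s => sum0 M (fun y => h y s)).
Proof.
  induction M; simpl. rewrite sumC_zero. auto.
  rewrite IHM. rewrite <- sumC_plus. auto.
Qed.

Lemma sumC_blocks q M (w : nat -> C) :
  sumC (q * M) w = sum0 M (fun y => sumC q (fun s => w (q * y + s)%nat)).
Proof.
  induction M; simpl. rewrite Nat.mul_0_r. auto.
  replace (q * S M)%nat with (q * M + q)%nat by lia. rewrite sumC_split. rewrite IHM. auto.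
Qed.

Lemma riemann_sum (phi : R -> C) K h b0 : 0 <= K -> 0 < h ->
  (forall v w, -1 <= v <= 2 -> -1 <= w <= 2 -> Cmod (phi v - phi w) <= K * Rabs (v - w)) ->
  forall M, -1 < b0 - h -> b0 + h * (INR M - 1) < 2 ->
  Cmod (RtoC h * sum0 M (fun y => phi (b0 + h * INR y)) - CRInt phi (b0 - h) (b0 + h * (INR M - 1)))
  <= INR M * K * h ^ 2.
Proof.
  intros HK Hh HL. induction M; intros H1 H2.
  - cbn [sum0 INR]. replace (b0 + h * (0 - 1)) with (b0 - h) by ring.
    assert (E0 : CRInt phi (b0 - h) (b0 - h) = RtoC 0) by (unfold CRInt; rewrite RInt_point; reflexivity).
    rewrite E0. match goal with |- Cmod ?z <= _ => replace z with (RtoC 0) by ring end.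
    rewrite Cmod_0. lra.
  - assert (HM : 0 <= INR M) by apply pos_INR. rewrite S_INR in *.
    assert (IH := IHM H1 ltac:(nra)).
    set (A := b0 + h * (INR M - 1)). set (B := b0 + h * (INR M + 1 - 1)).
    assert (EA : ex_RInt phi (b0 - h) A).
    { apply (ex_RInt_lip _ (-1) 2 _ _ K); auto; unfold A; nra. }
    assert (EB : ex_RInt phi A B).
    { apply (ex_RInt_lip _ (-1) 2 _ _ K); auto; unfold A, B; nra. }
    assert (EC : CRInt phi (b0 - h) B = (CRInt phi (b0 - h) A + CRInt phi A B)%C).
    { symmetry. apply (RInt_Chasles (V:=C_R_CompleteNormedModule) phi (b0 - h) A B EA EB). }
    rewrite EC.
    cbn [sum0].
    replace (b0 + h * INR M) with B by (unfold B; ring).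
    assert (Hl : Cmod (RtoC h * phi B - CRInt phi A B) <= K * h ^ 2).
    { replace (RtoC h * phi B)%C with (CRInt (fun _ => phi B) A B).
      2: { rewrite CRInt_const. f_equal. unfold A, B. f_equal. ring. }
      rewrite <- CRInt_minus; auto.
      2: { apply (ex_RInt_const (V:=C_R_NormedModule)). }
      replace (K * h ^ 2) with ((B - A) * (K * h)) by (unfold A, B; ring).
      apply CRInt_bound. unfold A, B; nra.
      apply (ex_RInt_minus (V:=C_R_NormedModule)); auto. apply (ex_RInt_const (V:=C_R_NormedModule)).
      intros x Hx. rewrite HL; try (unfold A, B in *; nra).
      apply Rmult_le_compat_l; auto. unfold A, B in *. rewrite Rabs_right; nra. }
    replace (RtoC h * (sum0 M (fun y => phi (b0 + h * INR y)%R) + phi B) - (CRInt phi (b0 - h) A + CRInt phi A B))%C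
      with ((RtoC h * sum0 M (fun y => phi (b0 + h * INR y)%R) - CRInt phi (b0 - h) A) + (RtoC h * phi B - CRInt phi A B))%C by ring.
    eapply Rle_trans. apply Cmod_triangle. fold A in IH. lra.
Qed.

Lemma RtoC_mult_one (a b : R) : a * b = 1 -> (RtoC a * RtoC b)%C = RtoC 1.
Proof. intro H. rewrite <- H. apply injective_projections; simpl; ring. Qed.

Lemma div_le_l (a b c : R) : 0 < c -> a <= b * c -> a / c <= b.
Proof. intros. apply (Rmult_le_reg_r c); auto. unfold Rdiv. rewrite Rmult_assoc, Rinv_l by lra. lra. Qed.
Lemma div_ge_l (a b c : R) : 0 < c -> b * c <= a -> b <= a / c.
Proof. intros. apply (Rmult_le_reg_r c); auto. unfold Rdiv. rewrite Rmult_assoc, Rinv_l by lra. lra. Qed.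
Lemma div_gt_l (a b c : R) : 0 < c -> b * c < a -> b < a / c.
Proof. intros. apply (Rmult_lt_reg_r c); auto. unfold Rdiv. rewrite Rmult_assoc, Rinv_l by lra. lra. Qed.

Lemma block_riemann (phi : R -> C) K (q P M s : nat) : 0 <= K ->
  (forall v, -1 <= v <= 2 -> Cmod (phi v) <= 1) ->
  (forall v w, -1 <= v <= 2 -> -1 <= w <= 2 -> Cmod (phi v - phi w) <= K * Rabs (v - w)) ->
  (1 <= q <= P)%nat -> (1 <= s <= q)%nat -> (q * M <= P < q * M + q)%nat ->
  Cmod (sum0 M (fun y => phi (INR (q * y + s) / INR P)%R) - RtoC (INR P / INR q) * CRInt phi 0 1) <= K + 3.
Proof.
  intros HK HB HL Hq Hs HM.
  assert (Pr : 1 <= INR P) by (apply (le_INR 1); lia).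
  assert (qr : 1 <= INR q) by (apply (le_INR 1); lia).
  assert (qP : INR q <= INR P) by (apply le_INR; lia).
  assert (sr : 1 <= INR s) by (apply (le_INR 1); lia).
  assert (sq : INR s <= INR q) by (apply le_INR; lia).
  assert (M1 : (1 <= M)%nat) by nia.
  assert (Mr : 1 <= INR M) by (apply (le_INR 1); lia).
  assert (qMP : INR q * INR M <= INR P) by (rewrite <- mult_INR; apply le_INR; lia).
  assert (qMP2 : INR P + 1 <= INR q * INR M + INR q) by (rewrite <- mult_INR, <- S_INR, <- plus_INR; apply le_INR; lia).
  set (h := INR q / INR P). set (b0 := INR s / INR P).
  assert (hpos : 0 < h) by (unfold h; apply Rdiv_lt_0_compat; lra).
  assert (h1 : h <= 1) by (unfold h; apply div_le_l; lra).
  assert (Mh : INR M * h <= 1). { unfold h. replace (INR M * (INR q / INR P)) with ((INR q * INR M) / INR P) by (field; lra). apply div_le_l; lra. }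
  set (lo := b0 - h). set (hi := b0 + h * (INR M - 1)).
  assert (Elo : lo = (INR s - INR q) / INR P) by (unfold lo, b0, h; field; lra).
  assert (Ehi : hi = (INR s + INR q * INR M - INR q) / INR P) by (unfold hi, b0, h; field; lra).
  assert (Hlo1 : -1 < lo). { rewrite Elo. apply div_gt_l; lra. }
  assert (Hlo2 : lo <= 0). { rewrite Elo. apply div_le_l; lra. }
  assert (Hlo3 : 0 - lo <= h). { rewrite Elo. unfold h. replace (0 - (INR s - INR q) / INR P) with ((INR q - INR s)/ INR P) by (field; lra). apply div_le_l; try lra. replace (INR q / INR P * INR P) with (INR q) by (field; lra). lra. }
  assert (Hhi1 : 0 <= hi). { rewrite Ehi. apply div_ge_l; nra. }
  assert (Hhi2 : hi <= 1). { rewrite Ehi. apply div_le_l; nra. }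
  assert (Hhi3 : 1 - hi <= 2 * h). { rewrite Ehi. unfold h. replace (1 - (INR s + INR q * INR M - INR q) / INR P) with ((INR P - INR s - INR q * INR M + INR q) / INR P) by (field; lra). apply div_le_l; try lra. replace (2 * (INR q / INR P) * INR P) with (2 * INR q) by (field; lra). lra. }
  assert (RS := riemann_sum phi K h b0 HK hpos HL M Hlo1 ltac:(fold hi; lra)). fold lo hi in RS.
  rewrite (sum0_ext M _ (fun y => phi (b0 + h * INR y))) in *.
  2: { intros y _. f_equal. unfold b0, h. rewrite plus_INR, mult_INR. field. lra. }
  set (S0 := sum0 M (fun y => phi (b0 + h * INR y))) in *.
  assert (Ex : forall a b, -1 < a -> a <= b -> b < 2 -> ex_RInt phi a b).
  { intros. apply (ex_RInt_lip _ (-1) 2 _ _ K); auto. }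
  assert (E1 : CRInt phi lo hi = (CRInt phi lo 0 + CRInt phi 0 hi)%C).
  { symmetry. apply (RInt_Chasles (V:=C_R_CompleteNormedModule)); apply Ex; lra. }
  assert (E2 : CRInt phi 0 1 = (CRInt phi 0 hi + CRInt phi hi 1)%C).
  { symmetry. apply (RInt_Chasles (V:=C_R_CompleteNormedModule)); apply Ex; lra. }
  assert (B1 : Cmod (CRInt phi lo 0) <= h).
  { eapply Rle_trans. apply CRInt_bound. lra. apply Ex; lra. intros; apply HB; lra. lra. }
  assert (B2 : Cmod (CRInt phi hi 1) <= 2 * h).
  { eapply Rle_trans. apply CRInt_bound. lra. apply Ex; lra. intros; apply HB; lra. lra. }
  assert (Main : Cmod (RtoC h * S0 - CRInt phi 0 1) <= INR M * K * h ^ 2 + 3 * h).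
  { replace (RtoC h * S0 - CRInt phi 0 1)%C with
      ((RtoC h * S0 - CRInt phi lo hi) + (CRInt phi lo 0 - CRInt phi hi 1))%C.
    2: { rewrite E1, E2. ring. }
    eapply Rle_trans. apply Cmod_triangle.
    assert (Cmod (CRInt phi lo 0 - CRInt phi hi 1) <= h + 2 * h).
    { unfold Cminus. eapply Rle_trans. apply Cmod_triangle. rewrite Cmod_opp. lra. }
    lra. }
  assert (Hinv : INR P / INR q * h = 1) by (unfold h; field; lra).
  replace (S0 - RtoC (INR P / INR q) * CRInt phi 0 1)%C with (RtoC (INR P / INR q) * (RtoC h * S0 - CRInt phi 0 1))%C.
  2: { transitivity ((RtoC (INR P / INR q) * RtoC h) * S0 - RtoC (INR P / INR q) * CRInt phi 0 1)%C. ring.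
       rewrite RtoC_mult_one by auto. ring. }
  rewrite Cmod_RtoC_mult. rewrite Rabs_right by (apply Rle_ge; apply Rdiv_le_0_compat; lra).
  assert (Hpq : INR P / INR q = / h) by (unfold h; field; lra).
  rewrite Hpq. apply (Rmult_le_reg_l h). auto. rewrite <- Rmult_assoc. rewrite Rinv_r by lra. rewrite Rmult_1_l.
  eapply Rle_trans. apply Main. assert (0 <= K*h*(1 - INR M*h)) by (apply Rmult_le_pos; [apply Rmult_le_pos|]; lra). replace (INR M * K * h ^ 2) with (K * h - K*h*(1 - INR M*h)) by ring. lra.
Qed.

Lemma riemann_1d (psi : R -> R -> C) K (q P : nat) : 0 <= K -> (1 <= q <= P)%nat ->
  (forall s v, -1 <= v <= 2 -> Cmod (psi s v) <= 1) ->
  (forall (s : nat) v, psi (INR (s + q)) v = psi (INR s) v) ->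
  (forall s v w, -1 <= v <= 2 -> -1 <= w <= 2 -> Cmod (psi s v - psi s w) <= K * Rabs (v - w)) ->
  Cmod (sumC P (fun t => psi (INR t) (INR t / INR P)) -
        RtoC (INR P / INR q) * sumC q (fun s => CRInt (psi (INR s)) 0 1)) <= INR q * (K + 4).
Proof.
  intros HK Hq HB Hper HL.
  assert (Pr : 1 <= INR P) by (apply (le_INR 1); lia).
  set (M := (P / q)%nat). set (r0 := (P mod q)%nat).
  assert (EP : P = (q * M + r0)%nat) by (apply Nat.div_mod; lia).
  assert (Hr0 : (r0 < q)%nat) by (apply Nat.mod_upper_bound; lia).
  set (w := fun t : nat => psi (INR t) (INR t / INR P)).
  assert (ES : sumC P w = (sumC (q * M) w + sumC r0 (fun i => w (q * M + i)%nat))%C).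
  { rewrite <- sumC_split. rewrite <- EP. auto. }
  assert (Tail : Cmod (sumC r0 (fun i => w (q * M + i)%nat)) <= INR q).
  { eapply Rle_trans. apply (sumC_bound _ _ 1). intros i Hi. unfold w. apply HB.
    split. apply Rle_trans with 0. lra. apply Rdiv_le_0_compat. apply pos_INR. lra.
    apply Rle_trans with 1. apply div_le_l. lra. rewrite Rmult_1_l. apply le_INR. lia. lra.
    rewrite Rmult_1_r. apply le_INR. lia. }
  assert (Hper2 : forall y s v, psi (INR (q * y + s)) v = psi (INR s) v).
  { induction y; intros. rewrite Nat.mul_0_r. auto.
    replace (q * S y + s)%nat with ((q * y + s) + q)%nat by lia. rewrite Hper. auto. }
  assert (EB : sumC (q * M) w = sumC q (fun s => sum0 M (fun y => psi (INR s) (INR (q * y + s) / INR P)))).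
  { rewrite sumC_blocks. rewrite <- sum0_sumC_swap. apply sum0_ext. intros y _. apply sumC_ext.
    intros s _. unfold w. rewrite Hper2. auto. }
  rewrite ES, EB.
  rewrite <- sumC_scal.
  replace (sumC q (fun s => sum0 M (fun y => psi (INR s) (INR (q * y + s) / INR P)%R)) +
     sumC r0 (fun i => w (q * M + i)%nat) -
     sumC q (fun s => RtoC (INR P / INR q) * CRInt (psi (INR s)) 0 1))%C with
    (sumC q (fun s => sum0 M (fun y => psi (INR s) (INR (q * y + s) / INR P)%R) - RtoC (INR P / INR q) * CRInt (psi (INR s)) 0 1) +
     sumC r0 (fun i => w (q * M + i)%nat))%C.
  2: { rewrite sumC_minus. ring. }
  eapply Rle_trans. apply Cmod_triangle.
  assert (Cmod (sumC q (fun s => sum0 M (fun y => psi (INR s) (INR (q * y + s) / INR P)%R) - RtoC (INR P / INR q) * CRInt (psi (INR s)) 0 1)%C) <= INR q * (K + 3)).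
  { apply sumC_bound. intros s Hs. apply block_riemann; auto. lia. }
  lra.
Qed.


Definition sc (P : nat) (x : nat -> R) : nat -> R := fun j => x j / INR P.

Lemma sc_upd P x j a : sc P (upd x j a) = upd (sc P x) j (a / INR P).
Proof. apply functional_extensionality; intro i; unfold sc, upd. destruct (Nat.eqb i j); auto. Qed.

Lemma multi_riemann (q P : nat) K : 0 <= K -> (1 <= q <= P)%nat ->
  forall m (Phi : (nat -> R) -> (nat -> R) -> C),
  (forall x u, Cmod (Phi x u) <= 1) ->
  (forall x u j (s : nat), IntPt x -> Phi (upd x j (INR (s + q))) u = Phi (upd x j (INR s)) u) ->
  (forall x, NiceC K (Phi x)) ->
  Cmod (boxsum P m (fun x => Phi x (sc P x)) -
        RtoC ((INR P / INR q) ^ m) * boxsum q m (fun z => cubeint m (Phi z)))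
  <= INR m * INR q * INR P ^ m * (K + 4) / INR P.
Proof.
  intros HK Hq.
  assert (Pr : 1 <= INR P) by (apply (le_INR 1); lia).
  assert (qr : 1 <= INR q) by (apply (le_INR 1); lia).
  set (c := INR P / INR q).
  assert (cpos : 0 < c) by (unfold c; apply Rdiv_lt_0_compat; lra).
  induction m; intros Phi HB Hper HN.
  - cbn [boxsum cubeint]. replace (sc P (fun _ => 0)) with (fun _ : nat => 0).
    2: { apply functional_extensionality; intro; unfold sc. unfold Rdiv; ring. }
    simpl pow. replace (Phi (fun _ => 0) (fun _ => 0) - RtoC 1 * Phi (fun _ => 0) (fun _ => 0))%C with (RtoC 0) by ring.
    rewrite Cmod_0. simpl. lra.
  - set (Pt := fun (t : nat) x u => Phi (upd x (S m) (INR t)) (upd u (S m) (INR t / INR P))).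
    assert (HPt : forall t, (1 <= t <= P)%nat ->
      Cmod (boxsum P m (fun x => Pt t x (sc P x)) - RtoC (c ^ m) * boxsum q m (fun z => cubeint m (Pt t z)))
      <= INR m * INR q * INR P ^ m * (K + 4) / INR P).
    { intros t Ht. apply IHm.
      - intros; apply HB.
      - intros x u j s Hx. unfold Pt. destruct (Nat.eq_dec j (S m)).
        + subst. rewrite !upd_same. auto.
        + rewrite !(upd_comm x j (S m)) by auto. apply Hper. apply IntPt_upd; auto.
      - intros x. unfold Pt. apply Nice_upd; auto. split.
        apply Rle_trans with 0. lra. apply Rdiv_le_0_compat. apply pos_INR. lra.
        apply Rle_trans with 1. apply div_le_l. lra. rewrite Rmult_1_l. apply le_INR. lia. lra. }
    assert (EX : boxsum P (S m) (fun x => Phi x (sc P x)) = sumC P (fun t => boxsum P m (fun x => Pt t x (sc P x)))).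
    { cbn [boxsum]. apply sumC_ext. intros t _. apply boxsum_ext. intros x _. unfold Pt. rewrite sc_upd. auto. }
    set (Y := sumC P (fun t => RtoC (c ^ m) * boxsum q m (fun z => cubeint m (Pt t z)))%C).
    assert (XY : Cmod (boxsum P (S m) (fun x => Phi x (sc P x)) - Y) <= INR P * (INR m * INR q * INR P ^ m * (K + 4) / INR P)).
    { rewrite EX. unfold Y. rewrite <- sumC_minus. apply sumC_bound. exact HPt. }
    set (psi := fun z s v => cubeint m (fun u => Phi (upd z (S m) s) (upd u (S m) v))).
    assert (EY : Y = (RtoC (c ^ m) * boxsum q m (fun z => sumC P (fun t => psi z (INR t) (INR t / INR P)%R)))%C).
    { unfold Y. rewrite sumC_scal. f_equal. rewrite boxsum_sumC. auto. }
    set (Z := (RtoC (c ^ m) * boxsum q m (fun z => RtoC c * sumC q (fun s => CRInt (psi z (INR s)) 0 1)))%C).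
    assert (YZ : Cmod (Y - Z) <= c ^ m * (INR q ^ m * (INR q * (K + 4)))).
    { rewrite EY. unfold Z. replace (RtoC (c ^ m) * boxsum q m (fun z => sumC P (fun t => psi z (INR t) (INR t / INR P)%R)) -
        RtoC (c ^ m) * boxsum q m (fun z => RtoC c * sumC q (fun s => CRInt (psi z (INR s)) 0 1)))%C with
        (RtoC (c ^ m) * boxsum q m (fun z => sumC P (fun t => psi z (INR t) (INR t / INR P)%R) - RtoC c * sumC q (fun s => CRInt (psi z (INR s)) 0 1))%C)%C.
      2: { rewrite boxsum_minus. ring. }
      rewrite Cmod_RtoC_mult. rewrite Rabs_right by (apply Rle_ge; apply pow_le; lra).
      apply Rmult_le_compat_l. apply pow_le; lra.
      apply boxsum_bound. intros z Hz. unfold c. apply (riemann_1d (psi z) K q P); auto.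
      - intros s v Hv. unfold psi. apply (cubeint_bound m K). apply Nice_upd; auto. intros; apply HB.
      - intros s v. unfold psi. f_equal. apply functional_extensionality; intro u. apply Hper. auto.
      - intros s v w Hv Hw. unfold psi. apply cubeint_lip; auto. }
    assert (EZ : Z = (RtoC (c ^ S m) * boxsum q (S m) (fun z => cubeint (S m) (Phi z)))%C).
    { unfold Z. rewrite boxsum_scal. cbn [boxsum]. rewrite <- boxsum_sumC.
      replace (c ^ S m) with (c ^ m * c) by (simpl; ring). rewrite RtoC_mult. ring_simplify.
      reflexivity. }
    rewrite <- EZ.
    eapply Rle_trans. apply (Cmod_tri3 _ Y). 
    assert (Hcq : c ^ m * INR q ^ m = INR P ^ m). { rewrite <- Rpow_mult_distr. unfold c. f_equal. field. lra. }
    replace (INR (S m) * INR q * INR P ^ S m * (K + 4) / INR P) with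
      (INR P * (INR m * INR q * INR P ^ m * (K + 4) / INR P) + c ^ m * (INR q ^ m * (INR q * (K + 4)))).
    lra.
    rewrite S_INR. replace (c ^ m * (INR q ^ m * (INR q * (K + 4)))) with ((c ^ m * INR q ^ m) * (INR q * (K + 4))) by ring.
    rewrite Hcq. simpl. field. lra.
Qed.


Lemma prodR_ext k (g1 g2 : nat -> R) : (forall i, g1 i = g2 i) -> prodR k g1 = prodR k g2.
Proof. induction k; simpl; intros; auto. rewrite IHk, H; auto. Qed.

Lemma prodR_scal k (a : R) (g : nat -> R) : prodR k (fun i => a * g i) = a ^ k * prodR k g.
Proof. induction k; simpl. ring. rewrite IHk. ring. Qed.

Lemma fd_hom d s c (u : nat -> R) : fd d s (fun j => c * u j) = c ^ d * fd d s u.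
Proof.
  unfold fd. pose proof (Nat.div2_odd d) as Hd.
  destruct (Nat.even d) eqn:E.
  - assert (Nat.odd d = false) by (rewrite <- Nat.negb_even, E; auto).
    rewrite H in Hd. simpl in Hd. rewrite Nat.add_0_r in Hd.
    rewrite (prodR_ext _ _ (fun i => c^2 * (u (s + (2 * i - 1))%nat ^ 2 + u (s + 2 * i)%nat ^ 2))) by (intros; ring).
    rewrite prodR_scal. f_equal. rewrite <- pow_mult. f_equal. lia.
  - assert (Nat.odd d = true) by (rewrite <- Nat.negb_even, E; auto).
    rewrite H in Hd. simpl in Hd.
    rewrite (prodR_ext _ _ (fun i => c^2 * (u (s + 2 * i)%nat ^ 2 + u (s + (2 * i + 1))%nat ^ 2))) by (intros; ring).
    rewrite prodR_scal. rewrite <- pow_mult.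
    assert (E2 : c ^ d = c * c ^ (2 * Nat.div2 d)). { replace d with (S (2 * Nat.div2 d)) at 1 by lia. reflexivity. }
    rewrite E2. ring.
Qed.

Lemma ff_hom d c (u : nat -> R) : ff d (fun j => c * u j) = c ^ d * ff d u.
Proof. unfold ff. rewrite !fd_hom. rewrite Rpow_mult_distr. ring. Qed.

Definition GoodR (f : (nat -> R) -> R) := exists L B, 0 <= L /\ 0 <= B /\
  (forall u, Dom u -> Rabs (f u) <= B) /\
  (forall u j t, Dom u -> -1 <= t <= 2 -> Rabs (f (upd u j t) - f u) <= L * Rabs (t - u j)).

Lemma GoodR_coord i : GoodR (fun u => u i).
Proof.
  exists 1, 2. repeat split; try lra.
  - intros u Hu. specialize (Hu i). apply Rabs_le. lra.
  - intros u j t Hu Ht. unfold upd. destruct (Nat.eqb_spec i j).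
    + subst. lra.
    + replace (u i - u i) with 0 by ring. rewrite Rabs_R0. pose proof (Rabs_pos (t - u j)). lra.
Qed.

Lemma GoodR_const c : GoodR (fun _ => c).
Proof.
  exists 0, (Rabs c). repeat split; try lra. apply Rabs_pos. intros; lra.
  intros. replace (c - c) with 0 by ring. rewrite Rabs_R0. lra.
Qed.

Lemma GoodR_plus f g : GoodR f -> GoodR g -> GoodR (fun u => f u + g u).
Proof.
  intros [L1 [B1 [? [? [Hb1 Hl1]]]]] [L2 [B2 [? [? [Hb2 Hl2]]]]].
  exists (L1 + L2), (B1 + B2). repeat split; try lra.
  - intros u Hu. eapply Rle_trans. apply Rabs_triang. specialize (Hb1 u Hu). specialize (Hb2 u Hu). lra.
  - intros u j t Hu Ht. replace (f (upd u j t) + g (upd u j t) - (f u + g u)) with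
      ((f (upd u j t) - f u) + (g (upd u j t) - g u)) by ring.
    eapply Rle_trans. apply Rabs_triang. specialize (Hl1 u j t Hu Ht). specialize (Hl2 u j t Hu Ht). lra.
Qed.

Lemma GoodR_opp f : GoodR f -> GoodR (fun u => - f u).
Proof.
  intros [L [B [? [? [Hb Hl]]]]]. exists L, B. repeat split; auto.
  - intros. rewrite Rabs_Ropp. auto.
  - intros. replace (- f (upd u j t) - - f u) with (- (f (upd u j t) - f u)) by ring. rewrite Rabs_Ropp. auto.
Qed.

Lemma GoodR_mult f g : GoodR f -> GoodR g -> GoodR (fun u => f u * g u).
Proof.
  intros [L1 [B1 [? [? [Hb1 Hl1]]]]] [L2 [B2 [? [? [Hb2 Hl2]]]]].
  exists (B1 * L2 + B2 * L1), (B1 * B2). repeat split; try nra.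
  - intros u Hu. rewrite Rabs_mult. specialize (Hb1 u Hu). specialize (Hb2 u Hu).
    apply Rmult_le_compat; auto; apply Rabs_pos.
  - intros u j t Hu Ht.
    replace (f (upd u j t) * g (upd u j t) - f u * g u) with
      (f (upd u j t) * (g (upd u j t) - g u) + g u * (f (upd u j t) - f u)) by ring.
    eapply Rle_trans. apply Rabs_triang. rewrite !Rabs_mult.
    assert (Hd : Dom (upd u j t)) by (apply Dom_upd; auto).
    specialize (Hb1 _ Hd). specialize (Hb2 u Hu). specialize (Hl1 u j t Hu Ht). specialize (Hl2 u j t Hu Ht).
    pose proof (Rabs_pos (f (upd u j t))). pose proof (Rabs_pos (g u)).
    pose proof (Rabs_pos (g (upd u j t) - g u)). pose proof (Rabs_pos (f (upd u j t) - f u)).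
    pose proof (Rabs_pos (t - u j)).
    assert (Rabs (f (upd u j t)) * Rabs (g (upd u j t) - g u) <= B1 * (L2 * Rabs (t - u j))) by (apply Rmult_le_compat; auto).
    assert (Rabs (g u) * Rabs (f (upd u j t) - f u) <= B2 * (L1 * Rabs (t - u j))) by (apply Rmult_le_compat; auto).
    nra.
Qed.

Lemma GoodR_pow f n : GoodR f -> GoodR (fun u => f u ^ n).
Proof.
  intros Hf. induction n; simpl. apply GoodR_const. apply GoodR_mult; auto.
Qed.

Lemma GoodR_prodR k (G : nat -> (nat -> R) -> R) : (forall i, GoodR (G i)) -> GoodR (fun u => prodR k (fun i => G i u)).
Proof. intros H. induction k; simpl. apply GoodR_const. apply GoodR_mult; auto. Qed.

Lemma GoodR_ext f g : (forall u, f u = g u) -> GoodR f -> GoodR g.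
Proof. intros E [L [B [? [? [Hb Hl]]]]]. exists L, B. repeat split; auto; intros; rewrite <- !E; auto. Qed.

Lemma GoodR_fd d s : GoodR (fd d s).
Proof.
  unfold fd. destruct (Nat.even d).
  - apply GoodR_prodR. intros i. apply GoodR_plus; apply GoodR_pow; apply GoodR_coord.
  - apply GoodR_mult. apply GoodR_coord. apply GoodR_prodR. intros i. apply GoodR_plus; apply GoodR_pow; apply GoodR_coord.
Qed.

Lemma GoodR_ff d : GoodR (ff d).
Proof.
  unfold ff. apply (GoodR_ext (fun u => fd d 0 u + fd d d u + - (u (2*d+1)%nat ^ d))).
  intros; ring. apply GoodR_plus. apply GoodR_plus; apply GoodR_fd. apply GoodR_opp. apply GoodR_pow. apply GoodR_coord.
Qed.

Definition IntGood (f : (nat -> R) -> R) :=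
  (forall x, IntPt x -> exists z : Z, f x = IZR z) /\
  (forall x j (s q : nat), IntPt x -> exists z : Z, f (upd x j (INR (s + q))) - f (upd x j (INR s)) = INR q * IZR z).

Lemma IntGood_coord i : IntGood (fun u => u i).
Proof.
  split.
  - intros x Hx. destruct (Hx i) as [k Hk]. exists (Z.of_nat k). rewrite Hk, INR_IZR_INZ. auto.
  - intros x j s q Hx. unfold upd. destruct (Nat.eqb i j).
    + exists 1%Z. rewrite plus_INR. simpl. ring.
    + exists 0%Z. simpl. ring.
Qed.

Lemma IntGood_const (z : Z) : IntGood (fun _ => IZR z).
Proof. split. intros; exists z; auto. intros. exists 0%Z. simpl; ring. Qed.

Lemma IntGood_plus f g : IntGood f -> IntGood g -> IntGood (fun u => f u + g u).
Proof.
  intros [F1 F2] [G1 G2]. split.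
  - intros x Hx. destruct (F1 x Hx) as [a Ha]. destruct (G1 x Hx) as [b Hb]. exists (a + b)%Z. rewrite plus_IZR. lra.
  - intros x j s q Hx. destruct (F2 x j s q Hx) as [a Ha]. destruct (G2 x j s q Hx) as [b Hb].
    exists (a + b)%Z. rewrite plus_IZR. nra.
Qed.

Lemma IntGood_opp f : IntGood f -> IntGood (fun u => - f u).
Proof.
  intros [F1 F2]. split.
  - intros x Hx. destruct (F1 x Hx) as [a Ha]. exists (- a)%Z. rewrite opp_IZR. lra.
  - intros x j s q Hx. destruct (F2 x j s q Hx) as [a Ha]. exists (- a)%Z. rewrite opp_IZR. nra.
Qed.

Lemma IntGood_mult f g : IntGood f -> IntGood g -> IntGood (fun u => f u * g u).
Proof.
  intros [F1 F2] [G1 G2]. split.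
  - intros x Hx. destruct (F1 x Hx) as [a Ha]. destruct (G1 x Hx) as [b Hb]. exists (a * b)%Z. rewrite mult_IZR. nra.
  - intros x j s q Hx. destruct (F2 x j s q Hx) as [a Ha]. destruct (G2 x j s q Hx) as [b Hb].
    destruct (F1 (upd x j (INR (s + q)))) as [c Hc]. apply IntPt_upd; auto.
    destruct (G1 (upd x j (INR s))) as [e He]. apply IntPt_upd; auto.
    exists (c * b + e * a)%Z. rewrite plus_IZR, !mult_IZR.
    replace (f (upd x j (INR (s + q))) * g (upd x j (INR (s + q))) - f (upd x j (INR s)) * g (upd x j (INR s)))
      with (f (upd x j (INR (s + q))) * (g (upd x j (INR (s + q))) - g (upd x j (INR s))) +
            g (upd x j (INR s)) * (f (upd x j (INR (s + q))) - f (upd x j (INR s)))) by ring.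
    rewrite Ha, Hb, Hc, He. ring.
Qed.

Lemma IntGood_pow f n : IntGood f -> IntGood (fun u => f u ^ n).
Proof. intros Hf. induction n; simpl. apply (IntGood_const 1). apply IntGood_mult; auto. Qed.

Lemma IntGood_prodR k (G : nat -> (nat -> R) -> R) : (forall i, IntGood (G i)) -> IntGood (fun u => prodR k (fun i => G i u)).
Proof. intros H. induction k; simpl. apply (IntGood_const 1). apply IntGood_mult; auto. Qed.

Lemma IntGood_ext f g : (forall u, f u = g u) -> IntGood f -> IntGood g.
Proof. intros E [F1 F2]. split; intros; rewrite <- ?E; auto. Qed.

Lemma IntGood_ff d : IntGood (ff d).
Proof.
  unfold ff. apply (IntGood_ext (fun u => fd d 0 u + fd d d u + - (u (2*d+1)%nat ^ d))).
  intros; ring.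
  assert (Hfd : forall s, IntGood (fd d s)).
  { intro s. unfold fd. destruct (Nat.even d).
    - apply IntGood_prodR. intros i. apply IntGood_plus; apply IntGood_pow; apply IntGood_coord.
    - apply IntGood_mult. apply IntGood_coord. apply IntGood_prodR. intros i. apply IntGood_plus; apply IntGood_pow; apply IntGood_coord. }
  apply IntGood_plus. apply IntGood_plus; auto. apply IntGood_opp. apply IntGood_pow. apply IntGood_coord.
Qed.


Definition IntBox (N : nat) (x : nat -> R) := forall j, exists k : nat, (k <= N)%nat /\ x j = INR k.

Lemma boxsum_bound_box N m : forall (g : (nat -> R) -> C) B,
  (forall x, IntBox N x -> Cmod (g x) <= B) -> Cmod (boxsum N m g) <= INR N ^ m * B.
Proof.
  assert (H0 : IntBox N (fun _ => 0)) by (intro j; exists 0%nat; split; auto; lia).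
  assert (Hu : forall x j k, IntBox N x -> (k <= N)%nat -> IntBox N (upd x j (INR k))).
  { intros x j k Hx Hk i. unfold upd. destruct (Nat.eqb i j). exists k; auto. apply Hx. }
  induction m; simpl; intros.
  - rewrite Rmult_1_l. apply H, H0.
  - eapply Rle_trans. apply sumC_bound. intros. apply IHm. intros. apply H. apply Hu; auto. lia.
    lra.
Qed.

Definition II (d : nat) (g : R) : C := cubeint (2*d+1) (fun xi => ee (g * ff d xi)).

Lemma ee_diff_mul (g1 g2 f : R) : Cmod (ee (g1 * f) - ee (g2 * f)) <= 4 * PI * Rabs f * Rabs (g1 - g2).
Proof.
  eapply Rle_trans. apply ee_lip. replace (g1 * f - g2 * f) with (f * (g1 - g2)) by ring.
  rewrite Rabs_mult. lra.
Qed.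


Section Arc.
Variable d : nat.
Variables L B : R.
Hypothesis HL0 : 0 <= L.
Hypothesis HB0 : 0 <= B.
Hypothesis Hbnd : forall u, Dom u -> Rabs (ff d u) <= B.
Hypothesis Hlip : forall u j t, Dom u -> -1 <= t <= 2 -> Rabs (ff d (upd u j t) - ff d u) <= L * Rabs (t - u j).

Lemma Nice_ee (g : R) (c : C) : Cmod c <= 1 -> NiceC (4 * PI * Rabs g * L) (fun u => c * ee (g * ff d u))%C.
Proof.
  intros Hc. pose proof PI_RGT_0. split. apply Rmult_le_pos; auto. apply Rmult_le_pos. lra. apply Rabs_pos.
  intros u j t Hu Ht.
  replace (c * ee (g * ff d (upd u j t)) - c * ee (g * ff d u))%C with (c * (ee (g * ff d (upd u j t)) - ee (g * ff d u)))%C by ring.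
  rewrite Cmod_mult. eapply Rle_trans. apply Rmult_le_compat_r. apply Cmod_ge_0. exact Hc. rewrite Rmult_1_l.
  eapply Rle_trans. apply ee_lip. replace (g * ff d (upd u j t) - g * ff d u) with (g * (ff d (upd u j t) - ff d u)) by ring.
  rewrite Rabs_mult. specialize (Hlip u j t Hu Ht). pose proof (Rabs_pos g).
  assert (Rabs g * Rabs (ff d (upd u j t) - ff d u) <= Rabs g * (L * Rabs (t - u j))) by (apply Rmult_le_compat_l; auto).
  replace (4 * PI * Rabs g * L * Rabs (t - u j)) with (4 * PI * (Rabs g * (L * Rabs (t - u j)))) by ring.
  apply Rmult_le_compat_l; lra.
Qed.

Lemma Nice_ee1 (g : R) : NiceC (4 * PI * Rabs g * L) (fun u => ee (g * ff d u)).
Proof.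
  destruct (Nice_ee g (RtoC 1)) as [H1 H2]. rewrite Cmod_1; lra. split; auto.
  intros. specialize (H2 u j t H H0). replace (ee (g * ff d (upd u j t)) - ee (g * ff d u))%C with
    (RtoC 1 * ee (g * ff d (upd u j t)) - RtoC 1 * ee (g * ff d u))%C by ring. auto.
Qed.

Lemma II_lip (g1 g2 : R) : Cmod (II d g1 - II d g2) <= 4 * PI * B * Rabs (g1 - g2).
Proof.
  unfold II. apply (cubeint_diff _ (4 * PI * Rabs g1 * L) (4 * PI * Rabs g2 * L)).
  apply Nice_ee1. apply Nice_ee1. intros u Hu. eapply Rle_trans. apply ee_diff_mul.
  pose proof PI_RGT_0. pose proof (Rabs_pos (g1 - g2)). specialize (Hbnd u Hu).
  apply Rmult_le_compat_r; auto. apply Rmult_le_compat_l; lra.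
Qed.

Lemma II_exint a b : a <= b -> ex_RInt (II d) a b.
Proof.
  intros. apply (ex_RInt_lip _ (a - 1) (b + 1) a b (4 * PI * B)); try lra.
  pose proof PI_RGT_0; nra. intros; apply II_lip.
Qed.

Lemma II_bound g : Cmod (II d g) <= 1.
Proof.
  unfold II. apply (cubeint_bound _ (4 * PI * Rabs g * L)). apply Nice_ee1. intros; rewrite ee_mod; lra.
Qed.

Lemma ff_sc (P : nat) (x : nat -> R) : (1 <= P)%nat -> ff d x = INR P ^ d * ff d (sc P x).
Proof.
  intros HP. rewrite <- ff_hom. f_equal. apply functional_extensionality; intro j. unfold sc.
  field. apply not_0_INR. lia.
Qed.

Lemma FF_lip (P : nat) a1 a2 : (1 <= P)%nat ->
  Cmod (FF d P a1 - FF d P a2) <= INR P ^ (2*d+1) * (4 * PI * (INR P ^ d * B) * Rabs (a1 - a2)).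
Proof.
  intros HP. unfold FF. rewrite <- boxsum_minus. apply boxsum_bound_box. intros x Hx.
  eapply Rle_trans. apply ee_diff_mul.
  pose proof PI_RGT_0. pose proof (Rabs_pos (a1 - a2)).
  apply Rmult_le_compat_r; auto. apply Rmult_le_compat_l. lra.
  rewrite (ff_sc P x HP). rewrite Rabs_mult. rewrite Rabs_right by (apply Rle_ge, pow_le, pos_INR).
  apply Rmult_le_compat_l. apply pow_le, pos_INR. apply Hbnd.
  intro j. destruct (Hx j) as [k [Hk Ek]]. unfold sc. rewrite Ek.
  assert (1 <= INR P) by (apply (le_INR 1); lia). assert (INR k <= INR P) by (apply le_INR; lia).
  split. apply Rle_trans with 0. lra. apply Rdiv_le_0_compat. apply pos_INR. lra.
  apply Rle_trans with 1. apply div_le_l. lra. lra. lra.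
Qed.

Lemma FF_exint (P : nat) a b : (1 <= P)%nat -> a <= b -> ex_RInt (FF d P) a b.
Proof.
  intros. apply (ex_RInt_lip _ (a - 1) (b + 1) a b (INR P ^ (2*d+1) * (4 * PI * (INR P ^ d * B)))); try lra.
  pose proof PI_RGT_0. assert (0 <= INR P ^ d) by (apply pow_le, pos_INR).
  assert (0 <= INR P ^ (2*d+1)) by (apply pow_le, pos_INR).
  apply Rmult_le_pos; auto. apply Rmult_le_pos. lra. apply Rmult_le_pos; auto.
  intros. rewrite Rmult_assoc. apply FF_lip; auto.
Qed.

Lemma arc_approx (P q a : nat) (beta : R) : (1 <= q <= P)%nat ->
  Cmod (FF d P (INR a / INR q + beta) -
        RtoC ((INR P / INR q) ^ (2*d+1)) * (SS d q a * II d (INR P ^ d * beta)))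
  <= INR (2*d+1) * INR q * INR P ^ (2*d+1) * (4 * PI * Rabs (INR P ^ d * beta) * L + 4) / INR P.
Proof.
  intros Hq. set (g := INR P ^ d * beta).
  set (Phi := fun x u => (ee (INR a / INR q * ff d x) * ee (g * ff d u))%C).
  assert (E1 : FF d P (INR a / INR q + beta) = boxsum P (2*d+1) (fun x => Phi x (sc P x))).
  { unfold FF. apply boxsum_ext. intros x _. unfold Phi. rewrite <- ee_add. f_equal.
    rewrite (ff_sc P x) by lia. unfold g. ring. }
  assert (E2 : boxsum q (2*d+1) (fun z => cubeint (2*d+1) (Phi z)) = (SS d q a * II d g)%C).
  { unfold SS, II. rewrite <- (Cmult_comm (II d g)). unfold II. rewrite <- boxsum_scal.
    apply boxsum_ext. intros x _. unfold Phi. rewrite (cubeint_scal _ (4 * PI * Rabs g * L)).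
    ring. apply Nice_ee1. }
  rewrite E1, <- E2. apply multi_riemann; auto.
  - pose proof PI_RGT_0. apply Rmult_le_pos; auto. apply Rmult_le_pos. lra. apply Rabs_pos.
  - intros. unfold Phi. rewrite Cmod_mult, !ee_mod. lra.
  - intros x u j s Hx. unfold Phi. f_equal.
    destruct (proj2 (IntGood_ff d) x j s q Hx) as [z Hz].
    replace (INR a / INR q * ff d (upd x j (INR (s + q)))) with
      (INR a / INR q * ff d (upd x j (INR s)) + IZR (Z.of_nat a * z)).
    apply ee_Z.
    rewrite mult_IZR, <- INR_IZR_INZ.
    replace (ff d (upd x j (INR (s + q)))) with (ff d (upd x j (INR s)) + INR q * IZR z) by lra.
    field. apply not_0_INR. lia.
  - intros x. apply Nice_ee. rewrite ee_mod. lra.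
Qed.

End Arc.


Section Arc2.
Variable d : nat.
Variables L B : R.
Hypothesis HL0 : 0 <= L.
Hypothesis HB0 : 0 <= B.
Hypothesis Hbnd : forall u, Dom u -> Rabs (ff d u) <= B.
Hypothesis Hlip : forall u j t, Dom u -> -1 <= t <= 2 -> Rabs (ff d (upd u j t) - ff d u) <= L * Rabs (t - u j).

Lemma pow_id (P q : R) : 0 < q -> P ^ (d + 1) * / q ^ (2 * d + 1) * P ^ d = (P / q) ^ (2 * d + 1).
Proof.
  intros Hq. unfold Rdiv. rewrite Rpow_mult_distr, pow_inv.
  replace (2 * d + 1)%nat with ((d + 1) + d)%nat by lia. rewrite !pow_add. ring.
Qed.

Lemma arc_int (P q a : nat) (r : R) : (1 <= q <= P)%nat -> 0 < r ->
  Cmod (CRInt (FF d P) (INR a / INR q - r) (INR a / INR q + r) -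
        RtoC (INR P ^ (d + 1)) * ((RtoC (/ INR q ^ (2*d+1)) * SS d q a) * JJ d (INR P ^ d * r)))
  <= 2 * r * (INR (2*d+1) * INR q * INR P ^ (2*d+1) * (4 * PI * (INR P ^ d * r) * L + 4) / INR P).
Proof.
  intros Hq Hr. set (c0 := INR a / INR q). set (u := INR P ^ d).
  assert (Pr : 1 <= INR P) by (apply (le_INR 1); lia).
  assert (qr : 1 <= INR q) by (apply (le_INR 1); lia).
  assert (upos : 0 < u) by (apply pow_lt; lra).
  assert (HP1 : (1 <= P)%nat) by lia.
  assert (E1 : CRInt (FF d P) (c0 - r) (c0 + r) = CRInt (fun b => FF d P (c0 + b)) (-r) r).
  { pose proof (RInt_comp_lin (V:=C_R_CompleteNormedModule) (FF d P) 1 c0 (-r) r) as H.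
    replace (1 * - r + c0) with (c0 - r) in H by ring. replace (1 * r + c0) with (c0 + r) in H by ring.
    unfold CRInt. rewrite <- H. apply (RInt_ext (V:=C_R_CompleteNormedModule)). intros.
    rewrite scal_C. replace (1 * x + c0) with (c0 + x) by ring. apply Cmult_1_l.
    apply (FF_exint d B); auto. lra. }
  assert (EIu : ex_RInt (fun b => II d (u * b)) (-r) r).
  { apply (ex_RInt_lip _ (-r - 1) (r + 1) (-r) r (4 * PI * B * u)); try lra.
    pose proof PI_RGT_0. apply Rmult_le_pos; try lra. apply Rmult_le_pos; lra.
    intros. eapply Rle_trans. apply (II_lip d L B); auto.
    replace (u * s - u * t) with (u * (s - t)) by ring. rewrite Rabs_mult, Rabs_right by lra. lra. }
  assert (E2 : JJ d (u * r) = (RtoC u * CRInt (fun b => II d (u * b)) (-r) r)%C).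
  { pose proof (RInt_comp_lin (V:=C_R_CompleteNormedModule) (II d) u 0 (-r) r) as H.
    replace (u * - r + 0) with (- (u * r)) in H by ring. replace (u * r + 0) with (u * r) in H by ring.
    unfold JJ. change (fun gamma => cubeint (2 * d + 1) (fun xi => ee (gamma * ff d xi))) with (II d).
    unfold CRInt. rewrite <- H. rewrite <- CRInt_Cmult by auto. apply (RInt_ext (V:=C_R_CompleteNormedModule)). intros.
    rewrite scal_C. replace (u * x + 0) with (u * x) by ring. auto.
    apply (II_exint d L B); auto. pose proof (Rmult_le_pos u r); nra. }
  set (main := fun b => (RtoC ((INR P / INR q) ^ (2*d+1)) * (SS d q a * II d (u * b)))%C).
  assert (Emain : ex_RInt main (-r) r).
  { unfold main. apply ex_RInt_Cmult. apply ex_RInt_Cmult. auto. }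
  assert (E3 : (RtoC (INR P ^ (d + 1)) * ((RtoC (/ INR q ^ (2*d+1)) * SS d q a) * JJ d (u * r)))%C = CRInt main (-r) r).
  { unfold main. rewrite CRInt_Cmult by (apply ex_RInt_Cmult; auto). rewrite CRInt_Cmult by auto.
    rewrite E2. rewrite <- (pow_id (INR P) (INR q)) by lra. fold u. rewrite !RtoC_mult. ring. }
  fold u. rewrite E1, E3. 
  assert (EF : ex_RInt (fun b => FF d P (c0 + b)) (-r) r).
  { apply (ex_RInt_lip _ (-r - 1) (r + 1) (-r) r (INR P ^ (2*d+1) * (4 * PI * (INR P ^ d * B)))); try lra.
    pose proof PI_RGT_0. assert (0 <= INR P ^ d) by (apply pow_le, pos_INR).
    assert (0 <= INR P ^ (2*d+1)) by (apply pow_le, pos_INR).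
    apply Rmult_le_pos; auto. apply Rmult_le_pos. lra. apply Rmult_le_pos; auto.
    intros. eapply Rle_trans. apply (FF_lip d B); auto.
    replace (c0 + s - (c0 + t)) with (s - t) by ring. right; ring. }
  rewrite <- CRInt_minus by auto.
  replace (2 * r) with (r - - r) by ring.
  apply CRInt_bound. lra. apply (ex_RInt_minus (V:=C_R_NormedModule)); auto.
  intros b Hb. unfold main. unfold c0. eapply Rle_trans. apply (arc_approx d L); auto.
  assert (Rabs (u * b) <= u * r). { rewrite Rabs_mult, Rabs_right by lra. apply Rmult_le_compat_l. lra. apply Rabs_le; lra. }
  fold u.
  assert (0 <= INR (2*d+1) * INR q * INR P ^ (2*d+1)).
  { apply Rmult_le_pos. apply Rmult_le_pos; apply pos_INR. apply pow_le, pos_INR. }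
  unfold Rdiv. apply Rmult_le_compat_r. apply Rlt_le, Rinv_0_lt_compat. lra.
  apply Rmult_le_compat_l; auto. pose proof PI_RGT_0.
  assert (4 * PI * Rabs (u * b) * L <= 4 * PI * (u * r) * L).
  { apply Rmult_le_compat_r; auto. apply Rmult_le_compat_l; lra. }
  lra.
Qed.

End Arc2.


Lemma sumC_single N (h : nat -> C) k0 : (1 <= k0 <= N)%nat ->
  (forall k, (1 <= k <= N)%nat -> k <> k0 -> h k = RtoC 0) -> sumC N h = h k0.
Proof.
  induction N; intros Hk H. lia.
  cbn [sumC]. destruct (Nat.eq_dec k0 (S N)).
  - subst. rewrite (sumC_ext N h (fun _ => RtoC 0)). rewrite sumC_zero. ring.
    intros; apply H; lia.
  - rewrite IHN; try lia. rewrite (H (S N)) by lia. ring. intros; apply H; lia.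
Qed.

Lemma sumC_allzero N (h : nat -> C) : (forall k, (1 <= k <= N)%nat -> h k = RtoC 0) -> sumC N h = RtoC 0.
Proof. intros. rewrite (sumC_ext N h (fun _ => RtoC 0)) by auto. apply sumC_zero. Qed.

Section Dsum.
Variable N : nat.
Variable Q : R.

Definition Dsum (h : nat -> nat -> C) : C :=
  sumC N (fun q => if Rle_dec (INR q) Q then
    sumC q (fun a => if Nat.eqb (Nat.gcd a q) 1 then h q a else RtoC 0) else RtoC 0).

Lemma Dsum_ext h1 h2 : (forall q a, (1 <= a <= q)%nat -> (1 <= q <= N)%nat -> h1 q a = h2 q a) -> Dsum h1 = Dsum h2.
Proof.
  intros H. unfold Dsum. apply sumC_ext. intros q Hq. destruct (Rle_dec (INR q) Q); auto.
  apply sumC_ext. intros a Ha. destruct (Nat.eqb (Nat.gcd a q) 1); auto.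
Qed.

Lemma Dsum_minus h1 h2 : Dsum (fun q a => h1 q a - h2 q a)%C = (Dsum h1 - Dsum h2)%C.
Proof.
  unfold Dsum. rewrite <- sumC_minus. apply sumC_ext. intros q _. destruct (Rle_dec (INR q) Q).
  - rewrite <- sumC_minus. apply sumC_ext. intros a _. destruct (Nat.eqb (Nat.gcd a q) 1); auto. ring.
  - ring.
Qed.

Lemma Dsum_mult_r h (w : C) : Dsum (fun q a => h q a * w)%C = (Dsum h * w)%C.
Proof.
  unfold Dsum. rewrite Cmult_comm, <- sumC_scal. apply sumC_ext. intros q _. destruct (Rle_dec (INR q) Q).
  - rewrite <- sumC_scal. apply sumC_ext. intros a _. destruct (Nat.eqb (Nat.gcd a q) 1); ring.
  - ring.
Qed.

Lemma Dsum_mult_l h (w : C) : Dsum (fun q a => w * h q a)%C = (w * Dsum h)%C.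
Proof.
  rewrite (Dsum_ext _ (fun q a => h q a * w)%C). rewrite Dsum_mult_r. ring. intros; ring.
Qed.

Lemma Dsum_bound h M : 0 <= M -> 0 <= Q ->
  (forall q a, (1 <= q)%nat -> INR q <= Q -> (1 <= a <= q)%nat -> Cmod (h q a) <= M) ->
  Cmod (Dsum h) <= Q * (Q * M).
Proof.
  intros HM HQ H. unfold Dsum.
  assert (Gen : forall n, Cmod (sumC n (fun q => if Rle_dec (INR q) Q then
    sumC q (fun a => if Nat.eqb (Nat.gcd a q) 1 then h q a else RtoC 0) else RtoC 0)) <= Rmin (INR n) Q * (Q * M)).
  { induction n; cbn [sumC].
    - rewrite Cmod_0. simpl. rewrite Rmin_left by lra. lra.
    - eapply Rle_trans. apply Cmod_triangle.
      destruct (Rle_dec (INR (S n)) Q) as [Hl | Hl].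
      + assert (HI : Cmod (sumC (S n) (fun a => if Nat.eqb (Nat.gcd a (S n)) 1 then h (S n) a else RtoC 0)) <= Q * M).
        { eapply Rle_trans. apply (sumC_bound _ _ M). intros a Ha. destruct (Nat.eqb (Nat.gcd a (S n)) 1).
          apply H; auto. lia. rewrite Cmod_0; auto.
          apply Rmult_le_compat_r; auto. }
        rewrite S_INR in *. rewrite (Rmin_left (INR n) Q) in IHn by lra.
        rewrite (Rmin_left (INR n + 1) Q) by lra. cbn [sumC] in HI. lra.
      + rewrite Cmod_0. rewrite S_INR. assert (Rmin (INR n) Q <= Rmin (INR n + 1) Q).
        { apply Rle_min_compat_r. lra. }
        assert (0 <= Q * M) by (apply Rmult_le_pos; auto).
        assert (Rmin (INR n) Q * (Q*M) <= Rmin (INR n+1) Q * (Q*M)) by (apply Rmult_le_compat_r; auto). lra. }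
  eapply Rle_trans. apply Gen. apply Rmult_le_compat_r. apply Rmult_le_pos; auto. apply Rmin_r.
Qed.

End Dsum.

Lemma CRInt_sumC n (h : nat -> R -> C) a b : (forall k, (1 <= k <= n)%nat -> ex_RInt (h k) a b) ->
  ex_RInt (fun x => sumC n (fun k => h k x)) a b /\
  CRInt (fun x => sumC n (fun k => h k x)) a b = sumC n (fun k => CRInt (h k) a b).
Proof.
  induction n; intros H; cbn [sumC].
  - split. apply (ex_RInt_const (V:=C_R_NormedModule)). rewrite CRInt_const. ring.
  - destruct IHn as [E1 E2]. intros; apply H; lia.
    assert (E3 : ex_RInt (h (S n)) a b) by (apply H; lia).
    split. apply (ex_RInt_plus (V:=C_R_NormedModule)); auto.
    rewrite CRInt_plus; auto. rewrite E2. auto.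
Qed.

Lemma CRInt_if (c : bool) (f : R -> C) a b : ex_RInt f a b ->
  ex_RInt (fun x => if c then f x else RtoC 0) a b /\
  CRInt (fun x => if c then f x else RtoC 0) a b = if c then CRInt f a b else RtoC 0.
Proof.
  intros. destruct c; split; auto. apply (ex_RInt_const (V:=C_R_NormedModule)). rewrite CRInt_const. ring.
Qed.

Lemma CRInt_ifP (c : Prop) (dc : {c} + {~ c}) (f : R -> C) a b : ex_RInt f a b ->
  ex_RInt (fun x => if dc then f x else RtoC 0) a b /\
  CRInt (fun x => if dc then f x else RtoC 0) a b = if dc then CRInt f a b else RtoC 0.
Proof.
  intros. destruct dc; split; auto. apply (ex_RInt_const (V:=C_R_NormedModule)). rewrite CRInt_const. ring.
Qed.

Lemma CRInt_Dsum N Q (G : nat -> nat -> R -> C) a b : (forall q k, (1 <= q <= N)%nat -> (1 <= k <= q)%nat -> ex_RInt (G q k) a b) ->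
  CRInt (fun x => Dsum N Q (fun q k => G q k x)) a b = Dsum N Q (fun q k => CRInt (G q k) a b).
Proof.
  intros H. unfold Dsum.
  assert (Hin : forall q, (1 <= q <= N)%nat -> ex_RInt (fun x => sumC q (fun k => if Nat.eqb (Nat.gcd k q) 1 then G q k x else RtoC 0)) a b /\
     CRInt (fun x => sumC q (fun k => if Nat.eqb (Nat.gcd k q) 1 then G q k x else RtoC 0)) a b =
     sumC q (fun k => if Nat.eqb (Nat.gcd k q) 1 then CRInt (G q k) a b else RtoC 0)).
  { intros q Hq. destruct (CRInt_sumC q (fun k x => if Nat.eqb (Nat.gcd k q) 1 then G q k x else RtoC 0) a b) as [E1 E2].
    intros k Hk. apply CRInt_if; auto. split; auto. rewrite E2. apply sumC_ext. intros k Hk. apply CRInt_if; auto. }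
  destruct (CRInt_sumC N (fun q x => if Rle_dec (INR q) Q then
     sumC q (fun k => if Nat.eqb (Nat.gcd k q) 1 then G q k x else RtoC 0) else RtoC 0) a b) as [E1 E2].
  intros q Hq. apply CRInt_ifP. apply Hin; auto.
  rewrite E2. apply sumC_ext. intros q Hq. rewrite (proj2 (CRInt_ifP _ _ _ a b (proj1 (Hin q Hq)))).
  destruct (Rle_dec (INR q) Q); auto. apply Hin; auto.
Qed.

Lemma CRInt_ind (f : R -> C) A B c r : 0 < r -> A <= c - r -> c + r <= B ->
  ex_RInt f (c - r) (c + r) ->
  ex_RInt (fun x => RtoC (if Rle_dec (Rabs (x - c)) r then 1 else 0) * f x)%C A B /\
  CRInt (fun x => RtoC (if Rle_dec (Rabs (x - c)) r then 1 else 0) * f x)%C A B = CRInt f (c - r) (c + r).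
Proof.
  intros Hr HA HB Hf. set (g := fun x => (RtoC (if Rle_dec (Rabs (x - c)) r then 1 else 0) * f x)%C).
  assert (Z1 : forall x, Rmin A (c - r) < x < Rmax A (c - r) -> RtoC 0 = g x).
  { intros x Hx. rewrite Rmin_left, Rmax_right in Hx by lra. unfold g.
    destruct (Rle_dec (Rabs (x - c)) r). pose proof (Rle_abs (x - c)); pose proof (Rle_abs (-(x - c))); rewrite Rabs_Ropp in *. lra. ring. }
  assert (Z2 : forall x, Rmin (c + r) B < x < Rmax (c + r) B -> RtoC 0 = g x).
  { intros x Hx. rewrite Rmin_left, Rmax_right in Hx by lra. unfold g.
    destruct (Rle_dec (Rabs (x - c)) r). pose proof (Rle_abs (x - c)); pose proof (Rle_abs (-(x - c))); rewrite Rabs_Ropp in *. lra. ring. }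
  assert (Z3 : forall x, Rmin (c - r) (c + r) < x < Rmax (c - r) (c + r) -> f x = g x).
  { intros x Hx. rewrite Rmin_left, Rmax_right in Hx by lra. unfold g.
    destruct (Rle_dec (Rabs (x - c)) r). ring. exfalso; apply n. apply Rabs_le. lra. }
  assert (X1 : ex_RInt g A (c - r)) by (eapply ex_RInt_ext; [exact Z1 | apply (ex_RInt_const (V:=C_R_NormedModule))]).
  assert (X2 : ex_RInt g (c + r) B) by (eapply ex_RInt_ext; [exact Z2 | apply (ex_RInt_const (V:=C_R_NormedModule))]).
  assert (X3 : ex_RInt g (c - r) (c + r)) by (eapply ex_RInt_ext; [exact Z3 | exact Hf]).
  assert (I1 : CRInt g A (c - r) = RtoC 0).
  { rewrite <- (CRInt_ext (fun _ => RtoC 0)) by exact Z1. rewrite CRInt_const. ring. }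
  assert (I2 : CRInt g (c + r) B = RtoC 0).
  { rewrite <- (CRInt_ext (fun _ => RtoC 0)) by exact Z2. rewrite CRInt_const. ring. }
  assert (I3 : CRInt g (c - r) (c + r) = CRInt f (c - r) (c + r)).
  { symmetry. apply CRInt_ext. exact Z3. }
  assert (X13 : ex_RInt g A (c + r)) by (apply (ex_RInt_Chasles (V:=C_R_NormedModule)) with (c - r); auto).
  split. apply (ex_RInt_Chasles (V:=C_R_NormedModule)) with (c + r); auto.
  assert (EC1 : CRInt g A B = (CRInt g A (c + r) + CRInt g (c + r) B)%C).
  { symmetry. apply (RInt_Chasles (V:=C_R_CompleteNormedModule) g A (c + r) B X13 X2). }
  assert (EC2 : CRInt g A (c + r) = (CRInt g A (c - r) + CRInt g (c - r) (c + r))%C).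
  { symmetry. apply (RInt_Chasles (V:=C_R_CompleteNormedModule) g A (c - r) (c + r) X1 X3). }
  change (CRInt g A B = CRInt f (c - r) (c + r)).
  rewrite EC1, EC2, I1, I2, I3. ring.
Qed.


Lemma nat_cross (a q a' q' : nat) : (1 <= q)%nat -> (1 <= q')%nat -> Nat.gcd a q = 1%nat -> Nat.gcd a' q' = 1%nat ->
  (a * q' = a' * q)%nat -> q = q' /\ a = a'.
Proof.
  intros Hq Hq' G1 G2 E.
  assert (D1 : Nat.divide q q').
  { apply (Nat.gauss q a q'). exists a'. lia. rewrite Nat.gcd_comm. auto. }
  assert (D2 : Nat.divide q' q).
  { apply (Nat.gauss q' a' q). exists a. lia. rewrite Nat.gcd_comm. auto. }
  assert (q = q') by (apply Nat.divide_antisym; auto). subst. split; auto.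
  apply (Nat.mul_cancel_r a a' q'). lia. lia.
Qed.

Lemma INR_close (x y : nat) : Rabs (INR x - INR y) < 1 -> x = y.
Proof.
  intros H. destruct (lt_eq_lt_dec x y) as [[Hl|He]|Hl]; auto.
  - assert (INR x + 1 <= INR y) by (rewrite <- S_INR; apply le_INR; lia).
    rewrite Rabs_left in H by lra. lra.
  - assert (INR y + 1 <= INR x) by (rewrite <- S_INR; apply le_INR; lia).
    rewrite Rabs_right in H by lra. lra.
Qed.

Lemma Rabs_le_elim x r : Rabs x <= r -> -r <= x <= r.
Proof. intros. pose proof (Rle_abs x). pose proof (Rle_abs (-x)). rewrite Rabs_Ropp in *. lra. Qed.

Lemma disjoint_arcs r Q : 0 < r -> 2 * r * Q * Q < 1 ->
  forall al (q a q' a' : nat), (1 <= q)%nat -> INR q <= Q -> (1 <= q')%nat -> INR q' <= Q ->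
  Nat.gcd a q = 1%nat -> Nat.gcd a' q' = 1%nat ->
  Rabs (al - INR a / INR q) <= r -> Rabs (al - INR a' / INR q') <= r -> q = q' /\ a = a'.
Proof.
  intros Hr HQ al q a q' a' Hq HqQ Hq' Hq'Q G1 G2 H1 H2.
  assert (qr : 1 <= INR q) by (apply (le_INR 1); lia).
  assert (qr' : 1 <= INR q') by (apply (le_INR 1); lia).
  apply nat_cross; auto. apply INR_close. rewrite !mult_INR.
  replace (INR a * INR q' - INR a' * INR q) with (INR q * INR q' * (INR a / INR q - INR a' / INR q')) by (field; lra).
  rewrite Rabs_mult. rewrite Rabs_right by nra.
  apply Rabs_le_elim in H1. apply Rabs_le_elim in H2.
  assert (Rabs (INR a / INR q - INR a' / INR q') <= 2 * r) by (apply Rabs_le; lra).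
  apply Rle_lt_trans with (Q * Q * (2 * r)). 2: lra.
  apply Rmult_le_compat; try nra. apply Rabs_pos.
Qed.

Lemma Rpower_pos x y : 0 < Rpower x y.
Proof. unfold Rpower. apply exp_pos. Qed.

Theorem lemma3p2 :
  forall d : nat, (1 <= d)%nat ->
  exists delta0 : R, 0 < delta0 /\
  exists C0 : R, 0 < C0 /\
  forall delta : R, 0 < delta < delta0 ->
  exists P0 : nat, forall P : nat, (P0 <= P)%nat ->
    Cmod (Cminus (major_int d P delta)
                 (Cmult (RtoC (INR P ^ (d + 1)))
                        (Cmult (frakS d (Rpower (INR P) delta))
                               (JJ d (Rpower (INR P) delta)))))
    <= C0 * Rpower (INR P) (INR d + 5 * delta).
Proof.
  intros d Hd.
  destruct (GoodR_ff d) as [L [B [HL0 [HB0 [Hbnd Hlip]]]]].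
  exists (1/6). split. lra.
  pose proof PI_RGT_0 as HPI.
  assert (Hn : 1 <= INR (2*d+1)) by (apply (le_INR 1); lia).
  exists (2 * INR (2*d+1) * (4 * PI * L + 4)). split.
  { apply Rmult_lt_0_compat. lra. apply Rlt_le_trans with 4. lra.
    assert (0 <= 4 * PI * L) by (apply Rmult_le_pos; lra). lra. }
  intros delta Hdel. exists 5%nat. intros P HP.
  assert (Pr : 5 <= INR P). { replace 5 with (INR 5) by (simpl; lra). apply le_INR; lia. }
  assert (HP1 : (1 <= P)%nat) by lia.
  assert (dr : 1 <= INR d) by (apply (le_INR 1); lia).
  set (Q := Rpower (INR P) delta). set (r := Rpower (INR P) (delta - INR d)).
  assert (Q1 : 1 <= Q).
  { unfold Q. rewrite <- (Rpower_O (INR P)) by lra. apply Rle_Rpower; lra. }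
  assert (QP : Q <= INR P).
  { unfold Q. rewrite <- (Rpower_1 (INR P)) at 2 by lra. apply Rle_Rpower; lra. }
  assert (rpos : 0 < r) by apply Rpower_pos.
  assert (EQr : Q = INR P ^ d * r).
  { unfold Q, r. rewrite <- Rpower_pow by lra. rewrite <- Rpower_plus. f_equal. ring. }
  assert (Small : 2 * r * Q * Q < 1).
  { assert (E : r * Q * Q = Rpower (INR P) (3 * delta - INR d)).
    { unfold Q, r. rewrite <- !Rpower_plus. f_equal. ring. }
    assert (E2 : Rpower (INR P) (3 * delta - INR d) <= Rpower (INR P) (- / 2)).
    { apply Rle_Rpower; lra. }
    rewrite Rpower_Ropp, Rpower_sqrt in E2 by lra.
    assert (2 < sqrt (INR P)).
    { rewrite <- (sqrt_square 2) by lra. apply sqrt_lt_1_alt. lra. }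
    assert (/ sqrt (INR P) < / 2). { apply Rinv_lt_contravar. nra. auto. }
    lra. }
  set (N := Z.to_nat (up Q)).
  set (ind := fun (q a : nat) al => RtoC (if Rle_dec (Rabs (al - INR a / INR q)) r then 1 else 0)).
  assert (Hpt : forall al, (RtoC (major_ind d P delta al) * FF d P al)%C =
                 Dsum N Q (fun q a => ind q a al * FF d P al)%C).
  { intros al. unfold major_ind.
    destruct (excluded_middle_informative (in_major d P delta al)) as [Hm | Hm].
    - destruct Hm as [q0 [a0 [Hq0 [Hq0Q [Ha0 [G0 Hal0]]]]]]. fold Q in Hq0Q. fold r in Hal0.
      assert (Hq0N : (q0 <= N)%nat).
      { unfold N. destruct (archimed Q) as [A1 _].
        assert (INR q0 < IZR (up Q)) by lra. rewrite INR_IZR_INZ in H. apply lt_IZR in H. lia. }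
      unfold Dsum. rewrite (sumC_single N _ q0).
      + destruct (Rle_dec (INR q0) Q) as [_ | Hn0]. 2: lra.
        rewrite (sumC_single q0 _ a0).
        * rewrite G0. simpl. unfold ind. destruct (Rle_dec (Rabs (al - INR a0 / INR q0)) r). ring. lra.
        * lia.
        * intros a Ha Hne. destruct (Nat.eqb_spec (Nat.gcd a q0) 1); auto. unfold ind.
          destruct (Rle_dec (Rabs (al - INR a / INR q0)) r). 2: ring.
          exfalso. apply Hne. symmetry.
          refine (proj2 (disjoint_arcs r Q rpos Small al q0 a0 q0 a _ _ _ _ _ _ _ _)); auto.
      + lia.
      + intros q Hq Hne. destruct (Rle_dec (INR q) Q); auto.
        apply sumC_allzero. intros a Ha. destruct (Nat.eqb_spec (Nat.gcd a q) 1); auto. unfold ind.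
        destruct (Rle_dec (Rabs (al - INR a / INR q)) r). 2: ring.
        exfalso. apply Hne. symmetry.
        refine (proj1 (disjoint_arcs r Q rpos Small al q0 a0 q a _ _ _ _ _ _ _ _)); auto; lia.
    - unfold Dsum. rewrite sumC_allzero. ring.
      intros q Hq. destruct (Rle_dec (INR q) Q); auto.
      apply sumC_allzero. intros a Ha. destruct (Nat.eqb_spec (Nat.gcd a q) 1); auto. unfold ind.
      destruct (Rle_dec (Rabs (al - INR a / INR q)) r). 2: ring.
      exfalso. apply Hm. exists q, a. repeat split; auto; lia. }
  assert (EM : major_int d P delta = Dsum N Q (fun q a => CRInt (FF d P) (INR a / INR q - r) (INR a / INR q + r))).
  { unfold major_int. cbv zeta. fold r.
    rewrite (CRInt_ext _ (fun al => Dsum N Q (fun q a => ind q a al * FF d P al)%C)) by (intros; apply Hpt).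
    rewrite CRInt_Dsum.
    - apply Dsum_ext. intros q a Ha Hq. unfold ind.
      assert (qr : 1 <= INR q) by (apply (le_INR 1); lia).
      assert (0 <= INR a / INR q <= 1).
      { split. apply Rdiv_le_0_compat. apply pos_INR. lra. apply div_le_l. lra. rewrite Rmult_1_l. apply le_INR; lia. }
      apply CRInt_ind; auto; try lra. apply (FF_exint d B); auto. lra.
    - intros q a Hq Ha. unfold ind.
      assert (qr : 1 <= INR q) by (apply (le_INR 1); lia).
      assert (0 <= INR a / INR q <= 1).
      { split. apply Rdiv_le_0_compat. apply pos_INR. lra. apply div_le_l. lra. rewrite Rmult_1_l. apply le_INR; lia. }
      apply CRInt_ind; auto; try lra. apply (FF_exint d B); auto. lra. }
  assert (ES : frakS d Q = Dsum N Q (fun q a => RtoC (/ INR q ^ (2*d+1)) * SS d q a)%C) by reflexivity.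
  fold Q. rewrite EM, ES.
  rewrite <- Dsum_mult_r, <- Dsum_mult_l, <- Dsum_minus.
  set (M := 2 * r * (INR (2*d+1) * Q * INR P ^ (2*d+1) * (4 * PI * Q * L + 4) / INR P)).
  eapply Rle_trans. apply (Dsum_bound N Q _ M).
  { unfold M. apply Rmult_le_pos. lra. unfold Rdiv. apply Rmult_le_pos. 2: apply Rlt_le, Rinv_0_lt_compat; lra.
    apply Rmult_le_pos. apply Rmult_le_pos. nra. apply pow_le; lra.
    assert (0 <= 4 * PI * Q * L) by (apply Rmult_le_pos; try lra; apply Rmult_le_pos; lra). lra. }
  lra.
  { intros q a Hq HqQ Ha.
    assert (HqP : (q <= P)%nat) by (apply INR_le; lra).
    eapply Rle_trans. rewrite EQr. apply (arc_int d L B); auto; try lia.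
    rewrite <- EQr. unfold M.
    apply Rmult_le_compat_l. lra. unfold Rdiv. apply Rmult_le_compat_r. apply Rlt_le, Rinv_0_lt_compat; lra.
    apply Rmult_le_compat_r. assert (0 <= 4 * PI * Q * L) by (apply Rmult_le_pos; try lra; apply Rmult_le_pos; lra). lra.
    apply Rmult_le_compat_r. apply pow_le; lra.
    apply Rmult_le_compat_l; lra. }
  unfold M.
  assert (Epow : INR P ^ (2*d+1) / INR P = INR P ^ d * INR P ^ d).
  { replace (2*d+1)%nat with (S (d + d)) by lia. simpl. rewrite pow_add. field. lra. }
  assert (Efin : r * (Q * (Q * (Q * Q))) * (INR P ^ d * INR P ^ d) = Rpower (INR P) (INR d + 5 * delta)).
  { unfold r, Q. rewrite <- !Rpower_pow by lra. rewrite <- !Rpower_plus. f_equal. ring. }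
  assert (0 <= 4 * PI * L) by (apply Rmult_le_pos; lra).
  assert (H4 : 4 * PI * Q * L + 4 <= (4 * PI * L + 4) * Q) by nra.
  assert (Hpos : 0 <= r * (Q * (Q * Q)) * (INR P ^ d * INR P ^ d)).
  { apply Rmult_le_pos. apply Rmult_le_pos. lra. nra. apply Rmult_le_pos; apply pow_le; lra. }
  replace (Q * (Q * (2 * r * (INR (2 * d + 1) * Q * INR P ^ (2 * d + 1) * (4 * PI * Q * L + 4) / INR P))))
    with (2 * INR (2*d+1) * (r * (Q * (Q * Q)) * (INR P ^ (2 * d + 1) / INR P)) * (4 * PI * Q * L + 4))
    by (field; lra).
  rewrite Epow. rewrite <- Efin.
  replace (2 * INR (2 * d + 1) * (4 * PI * L + 4) * (r * (Q * (Q * (Q * Q))) * (INR P ^ d * INR P ^ d)))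
    with (2 * INR (2 * d + 1) * (r * (Q * (Q * Q)) * (INR P ^ d * INR P ^ d)) * ((4 * PI * L + 4) * Q)) by ring.
  apply Rmult_le_compat_l. 2: exact H4.
  apply Rmult_le_pos; auto. lra.
Qed.
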